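(* Let $m$ be a positive integer, $\omega$ a modulus of continuity, $f,g,h\in C^{m,\omega}(\mathbb{R})$, and $K\subseteq\mathbb{R}$ compact. If $\gamma=(f,g,h)$ satisfies the $A/V$ condition on $K$, then there is $\hat h\in C^{m,\omega}(\mathbb{R})$ with $\hat h|_K=h|_K$ and $\hat h'=2(f'g-fg')$ on $K$.
   Context: A modulus of continuity is a continuous, increasing, concave $\omega:[0,\infty)\to[0,\infty)$ with $\omega(0)=0$. $C^{m,\omega}(\mathbb{R})$: $m$-times continuously differentiable $\phi:\mathbb{R}\to\mathbb{R}$ with $\sup_{a\neq b}|\phi^{(m)}(b)-\phi^{(m)}(a)|/\omega(|b-a|)<\infty$. For $\gamma=(f,g,h)$ of class $C^m$ and $a\in\mathbb{R}$, $T_af(x)=\sum_{k=0}^m\frac{f^{(k)}(a)}{k!}(x-a)^k$ (similarly $T_ag$), and $A(\gamma;a,b)= h(b)-h(a)-2\int_a^b\big((T_af)'T_ag-(T_ag)'T_af\big) + 2f(a)(g(b)-T_ag(b)) - 2g(a)(f(b)-T_af(b))$, $V(\gamma;a,b)=(b-a)^{2m}+(b-a)^m\int_a^b(|(T_af)'|+|(T_ag)'|)$. $\gamma$ satisfies the $A/V$ condition on $E$ if for every $\varepsilon>0$ there is $\delta>0$ with $|A(\gamma;a,b)/V(\gamma;a,b)|<\varepsilon$ for all $a,b\in E$ with $0<b-a<\delta$. *)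

(* Defs.v *)
From Stdlib Require Import Reals Lra.
From Coquelicot Require Import Coquelicot.
Open Scope R_scope.

(* A modulus of continuity: omega : [0,oo) -> [0,oo), continuous, increasing,
   concave, omega 0 = 0.  Only its values on [0,oo) matter. *)
Definition modulus_of_continuity (w : R -> R) : Prop :=
  w 0 = 0 /\
  (forall t, 0 <= t -> 0 <= w t) /\
  (forall t, 0 <= t -> forall eps, 0 < eps -> exists delta, 0 < delta /\
       forall s, 0 <= s -> Rabs (s - t) < delta -> Rabs (w s - w t) < eps) /\
  (forall s t, 0 <= s -> s < t -> w s < w t) /\
  (forall x y l, 0 <= x -> 0 <= y -> 0 <= l <= 1 ->
       l * w x + (1 - l) * w y <= w (l * x + (1 - l) * y)).

Definition Cm (m : nat) (phi : R -> R) : Prop :=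
  (forall k, (k < m)%nat -> forall x, ex_derive (Derive_n phi k) x) /\
  (forall x, continuous (Derive_n phi m) x).

Definition Cmw (m : nat) (w : R -> R) (phi : R -> R) : Prop :=
  Cm m phi /\
  exists M, forall a b, a <> b ->
    Rabs (Derive_n phi m b - Derive_n phi m a) / w (Rabs (b - a)) <= M.

Definition Taylor (m : nat) (f : R -> R) (a : R) (x : R) : R :=
  sum_f_R0 (fun k => Derive_n f k a / INR (Factorial.fact k) * (x - a) ^ k) m.

Definition A_fun (m : nat) (f g h : R -> R) (a b : R) : R :=
  h b - h a
  - 2 * RInt (fun x => Derive (Taylor m f a) x * Taylor m g a x
                       - Derive (Taylor m g a) x * Taylor m f a x) a b
  + 2 * f a * (g b - Taylor m g a b)
  - 2 * g a * (f b - Taylor m f a b).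

Definition V_fun (m : nat) (f g : R -> R) (a b : R) : R :=
  (b - a) ^ (2 * m)
  + (b - a) ^ m * RInt (fun x => Rabs (Derive (Taylor m f a) x)
                                 + Rabs (Derive (Taylor m g a) x)) a b.

Definition AV_condition (m : nat) (f g h : R -> R) (E : R -> Prop) : Prop :=
  forall eps, 0 < eps -> exists delta, 0 < delta /\
    forall a b, E a -> E b -> 0 < b - a < delta ->
      Rabs (A_fun m f g h a b / V_fun m f g a b) < eps.

(* Main.v *)
Require Import Defs.
From Stdlib Require Import Reals Lra Lia Classical ClassicalEpsilon.
From Coquelicot Require Import Coquelicot.
Open Scope R_scope.


Lemma cont_eps (D : R -> R) x :
  (forall eps, 0 < eps -> exists d, 0 < d /\ forall y, Rabs (y - x) < d -> Rabs (D y - D x) < eps) ->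
  continuous D x.
Proof.
  intros H. apply filterlim_locally. intros eps.
  destruct (H eps (cond_pos eps)) as [d [Hd H']].
  exists (mkposreal d Hd). intros y Hy. apply H'. exact Hy.
Qed.

Lemma deriv_eps (f : R -> R) x l :
  (forall eps, 0 < eps -> exists d, 0 < d /\ forall y, Rabs (y - x) < d ->
     Rabs (f y - f x - l * (y - x)) <= eps * Rabs (y - x)) ->
  is_derive f x l.
Proof.
  intros H. apply is_derive_Reals. intros eps Heps.
  destruct (H (eps/2) ltac:(lra)) as [d [Hd H']].
  exists (mkposreal d Hd). intros h Hh0 Hh. simpl in Hh.
  assert (Hy : Rabs (x + h - x) < d) by (replace (x+h-x) with h by ring; exact Hh).
  specialize (H' (x + h) Hy).
  replace (x + h - x) with h in H' by ring.
  replace ((f (x + h) - f x) / h - l) with ((f (x+h) - f x - l * h) / h) by (field; auto).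
  assert (Hp : 0 < Rabs h) by (apply Rabs_pos_lt; auto).
  unfold Rdiv. rewrite Rabs_mult, Rabs_inv.
  apply Rle_lt_trans with (eps / 2 * Rabs h * / Rabs h).
  - apply Rmult_le_compat_r; [left; apply Rinv_0_lt_compat; auto | exact H'].
  - field_simplify; lra.
Qed.

Definition good (w : R -> R) : Prop :=
  w 0 = 0 /\ (forall t, 0 <= t -> 0 <= w t) /\
  (forall s t, 0 <= s <= t -> w s <= w t) /\
  (forall T, 0 < T -> exists C, 0 <= C /\ forall t, 0 <= t <= T -> t <= C * w t) /\
  (forall eps, 0 < eps -> exists d, 0 < d /\ forall t, 0 <= t < d -> w t < eps).

Lemma good_id : good (fun t => t).
Proof.
  repeat split; intros; try lra.
  - exists 1; split; intros; lra.
  - exists eps; split; intros; lra.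
Qed.

Definition locH (w : R -> R) (D : R -> R) : Prop :=
  forall p q, exists M, 0 <= M /\ forall x y, p <= x <= q -> p <= y <= q ->
    Rabs (D x - D y) <= M * w (Rabs (x - y)).

Lemma locH_ext w D1 D2 : (forall x, D1 x = D2 x) -> locH w D1 -> locH w D2.
Proof.
  intros E H p q. destruct (H p q) as [M [HM H']]. exists M; split; auto.
  intros x y Hx Hy. rewrite <- !E. auto.
Qed.

Lemma locH_bound w D : good w -> locH w D -> forall p q, exists B, 0 <= B /\
  forall x, p <= x <= q -> Rabs (D x) <= B.
Proof.
  intros [w0 [wp [wm _]]] H p q. destruct (H p q) as [M [HM H']].
  exists (Rabs (D p) + M * w (Rabs (q - p))). split.
  - apply Rplus_le_le_0_compat; [apply Rabs_pos|]. apply Rmult_le_pos; auto. apply wp, Rabs_pos.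
  - intros x Hx. assert (Hpq : p <= p <= q) by lra.
    specialize (H' x p Hx Hpq).
    assert (w (Rabs (x - p)) <= w (Rabs (q - p))).
    { apply wm. split. apply Rabs_pos. rewrite !Rabs_right by lra. lra. }
    assert (M * w (Rabs (x - p)) <= M * w (Rabs (q - p))) by (apply Rmult_le_compat_l; auto).
    pose proof (Rabs_triang_inv (D x) (D p)). lra.
Qed.

Lemma locH_cont w D : good w -> locH w D -> forall x, continuous D x.
Proof.
  intros Hg H x. pose proof Hg as [w0 [wp [wm [_ wc]]]].
  destruct (H (x-1) (x+1)) as [M [HM H']].
  apply cont_eps. intros eps Heps.
  destruct (wc (eps / (M+1))) as [d [Hd Hw]].
  { apply Rdiv_lt_0_compat; lra. }
  exists (Rmin d 1). split. { apply Rmin_pos; lra. }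
  intros y Hy. assert (Hy1 : Rabs (y - x) < d) by (apply Rlt_le_trans with (Rmin d 1); [exact Hy|apply Rmin_l]).
  assert (Hy2 : Rabs (y - x) < 1) by (apply Rlt_le_trans with (Rmin d 1); [exact Hy|apply Rmin_r]).
  assert (Hyb : x - 1 <= y <= x + 1) by (apply Rabs_lt_between in Hy2; lra).
  specialize (H' y x Hyb ltac:(lra)).
  specialize (Hw (Rabs (y - x)) (conj (Rabs_pos _) Hy1)).
  apply Rle_lt_trans with (M * w (Rabs (y - x))); auto.
  apply Rle_lt_trans with (M * (eps / (M + 1))).
  - apply Rmult_le_compat_l; lra.
  - apply Rmult_lt_reg_r with (M+1); [lra|]. field_simplify; nra.
Qed.

Lemma lip_locH w D : good w ->
  (forall p q, exists B, 0 <= B /\ forall x y, p <= x <= q -> p <= y <= q -> Rabs (D x - D y) <= B * Rabs (x - y)) ->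
  locH w D.
Proof.
  intros [w0 [wp [wm [wlin _]]]] H p q. destruct (H p q) as [B [HB H']].
  destruct (wlin (Rmax (q - p) 1)) as [C [HC Hc]]. { apply Rlt_le_trans with 1; [lra | apply Rmax_r]. }
  exists (B * C). split. { apply Rmult_le_pos; auto. }
  intros x y Hx Hy. eapply Rle_trans; [apply H'; auto|].
  rewrite Rmult_assoc. apply Rmult_le_compat_l; auto. apply Hc. split. apply Rabs_pos.
  apply Rle_trans with (q - p); [|apply Rmax_l]. apply Rabs_le; lra.
Qed.

Lemma mvt_lip D p q B : (forall x, ex_derive D x) ->
  (forall x, p <= x <= q -> Rabs (Derive D x) <= B) ->
  forall x y, p <= x <= q -> p <= y <= q -> Rabs (D x - D y) <= B * Rabs (x - y).
Proof.
  intros Hd HB x y Hx Hy.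
  destruct (MVT_abs D (Derive D) y x) as [c [Hc1 Hc2]].
  { intros c _. apply is_derive_Reals. apply Derive_correct. auto. }
  rewrite Hc1. apply Rmult_le_compat_r. apply Rabs_pos. apply HB.
  split. eapply Rle_trans; [|apply Hc2]. apply Rmin_glb; lra.
  eapply Rle_trans; [apply Hc2|]. apply Rmax_lub; lra.
Qed.

Definition LC (w : R -> R) (n : nat) (phi : R -> R) : Prop :=
  (forall k, (k < n)%nat -> forall x, ex_derive (Derive_n phi k) x) /\ locH w (Derive_n phi n).

Lemma Derive_n_S f n x : Derive_n f (S n) x = Derive_n (Derive f) n x.
Proof.
  revert x; induction n; intros x. reflexivity.
  simpl. apply Derive_ext. intros t. apply IHn.
Qed.

Lemma LC_ext w n f g : (forall x, f x = g x) -> LC w n f -> LC w n g.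
Proof.
  intros E [H1 H2]. split.
  - intros k Hk x. apply ex_derive_ext with (Derive_n f k).
    intros t. apply Derive_n_ext. auto. auto.
  - apply locH_ext with (Derive_n f n); auto. intros x; apply Derive_n_ext; auto.
Qed.

Lemma LC_S w n f : LC w (S n) f <-> (forall x, ex_derive f x) /\ LC w n (Derive f).
Proof.
  split.
  - intros [H1 H2]. split.
    + intros x. apply (H1 O); lia.
    + split.
      * intros k Hk x. apply ex_derive_ext with (Derive_n f (S k)).
        intros t; apply Derive_n_S. apply H1; lia.
      * apply locH_ext with (Derive_n f (S n)); auto. intros; apply Derive_n_S.
  - intros [H0 [H1 H2]]. split.
    + intros k Hk x. destruct k. apply H0.
      apply ex_derive_ext with (Derive_n (Derive f) k).
      intros t; symmetry; apply Derive_n_S. apply H1; lia.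
    + apply locH_ext with (Derive_n (Derive f) n); auto. intros; symmetry; apply Derive_n_S.
Qed.

Lemma LC_0 w f : LC w 0 f <-> locH w f.
Proof.
  split. intros [_ H]. exact H. intros H. split. intros; lia. exact H.
Qed.

Lemma LC_weaken w n f : good w -> LC w (S n) f -> LC w n f.
Proof.
  intros Hg [H1 H2]. split.
  - intros k Hk. apply H1. lia.
  - apply lip_locH; auto. intros p q.
    destruct (locH_bound w _ Hg H2 p q) as [B [HB HB']].
    exists B. split; auto. apply mvt_lip; auto.
Qed.

Lemma LC_weaken_le w n m f : good w -> (m <= n)%nat -> LC w n f -> LC w m f.
Proof.
  intros Hg Hmn. induction Hmn; auto. intros H. apply IHHmn. apply LC_weaken; auto.
Qed.

Lemma LC_cont w n f : good w -> LC w n f -> forall k, (k <= n)%nat -> forall x, continuous (Derive_n f k) x.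
Proof.
  intros Hg [H1 H2] k Hk x. destruct (Nat.eq_dec k n).
  - subst. apply locH_cont with w; auto.
  - apply (ex_derive_continuous (Derive_n f k)). apply H1. lia.
Qed.

Lemma LC_diff w n f : LC w (S n) f -> forall x, ex_derive f x.
Proof. intros H. apply LC_S in H. apply H. Qed.

Lemma LC_const w n c : good w -> LC w n (fun _ => c).
Proof.
  intros Hg. revert c. induction n; intros c.
  - apply LC_0. intros p q. exists 0. split. lra. intros. rewrite Rminus_diag, Rabs_R0. lra.
  - apply LC_S. split. intros; apply ex_derive_const.
    apply LC_ext with (fun _ => 0). intros; rewrite Derive_const; auto. apply IHn.
Qed.

Lemma LC_plus w n f g : good w -> LC w n f -> LC w n g -> LC w n (fun x => f x + g x).
Proof.
  intros Hg. revert f g. induction n; intros f g Hf Hgg.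
  - apply LC_0 in Hf; apply LC_0 in Hgg. apply LC_0. intros p q.
    destruct (Hf p q) as [M1 [HM1 H1]]. destruct (Hgg p q) as [M2 [HM2 H2]].
    exists (M1 + M2). split. lra. intros x y Hx Hy.
    specialize (H1 x y Hx Hy). specialize (H2 x y Hx Hy).
    replace (f x + g x - (f y + g y)) with ((f x - f y) + (g x - g y)) by ring.
    eapply Rle_trans. apply Rabs_triang. lra.
  - apply LC_S in Hf as [Hf1 Hf2]. apply LC_S in Hgg as [Hg1 Hg2]. apply LC_S. split.
    + intros x. apply (ex_derive_plus f g); auto.
    + apply LC_ext with (fun x => Derive f x + Derive g x).
      intros x. rewrite Derive_plus; auto. apply IHn; auto.
Qed.

Lemma LC_scal w n c f : good w -> LC w n f -> LC w n (fun x => c * f x).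
Proof.
  intros Hg. revert f. induction n; intros f Hf.
  - apply LC_0 in Hf. apply LC_0. intros p q. destruct (Hf p q) as [M [HM H]].
    exists (Rabs c * M). split. apply Rmult_le_pos; auto. apply Rabs_pos.
    intros x y Hx Hy. rewrite <- Rmult_minus_distr_l, Rabs_mult, Rmult_assoc.
    apply Rmult_le_compat_l. apply Rabs_pos. auto.
  - apply LC_S in Hf as [Hf1 Hf2]. apply LC_S. split.
    + intros x. apply ex_derive_scal; auto.
    + apply LC_ext with (fun x => c * Derive f x). intros x. rewrite Derive_scal; auto. apply IHn; auto.
Qed.

Lemma LC_minus w n f g : good w -> LC w n f -> LC w n g -> LC w n (fun x => f x - g x).
Proof.
  intros Hg Hf Hgg. apply LC_ext with (fun x => f x + (-1) * g x). intros; ring.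
  apply LC_plus; auto. apply LC_scal; auto.
Qed.

Lemma LC_mult w n f g : good w -> LC w n f -> LC w n g -> LC w n (fun x => f x * g x).
Proof.
  intros Hg. revert f g. induction n; intros f g Hf Hgg.
  - apply LC_0 in Hf; apply LC_0 in Hgg. apply LC_0. intros p q.
    destruct (Hf p q) as [M1 [HM1 H1]]. destruct (Hgg p q) as [M2 [HM2 H2]].
    destruct (locH_bound w f Hg Hf p q) as [B1 [HB1 HB1']].
    destruct (locH_bound w g Hg Hgg p q) as [B2 [HB2 HB2']].
    exists (B1 * M2 + B2 * M1). split. nra. intros x y Hx Hy.
    specialize (H1 x y Hx Hy). specialize (H2 x y Hx Hy).
    pose proof (HB1' x Hx). pose proof (HB2' y Hy).
    assert (0 <= w (Rabs (x - y))) by (apply Hg; apply Rabs_pos).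
    replace (f x * g x - f y * g y) with (f x * (g x - g y) + g y * (f x - f y)) by ring.
    eapply Rle_trans. apply Rabs_triang. rewrite !Rabs_mult.
    assert (Rabs (f x) * Rabs (g x - g y) <= B1 * (M2 * w (Rabs (x - y)))).
    { apply Rmult_le_compat; auto; apply Rabs_pos. }
    assert (Rabs (g y) * Rabs (f x - f y) <= B2 * (M1 * w (Rabs (x - y)))).
    { apply Rmult_le_compat; auto; apply Rabs_pos. }
    nra.
  - pose proof (LC_weaken _ _ _ Hg Hf) as Hf0. pose proof (LC_weaken _ _ _ Hg Hgg) as Hg0.
    apply LC_S in Hf as [Hf1 Hf2]. apply LC_S in Hgg as [Hg1 Hg2]. apply LC_S. split.
    + intros x. apply ex_derive_mult; auto.
    + apply LC_ext with (fun x => Derive f x * g x + f x * Derive g x).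
      intros x. rewrite Derive_mult; auto. apply LC_plus; auto.
Qed.

Lemma LC_inv w n f c : good w -> 0 < c -> (forall x, c <= f x) -> LC w n f -> LC w n (fun x => / f x).
Proof.
  intros Hg Hc Hfc. revert f Hfc. induction n; intros f Hfc Hf.
  - apply LC_0 in Hf. apply LC_0. intros p q. destruct (Hf p q) as [M [HM H]].
    exists (M / (c * c)). split. apply Rdiv_le_0_compat; nra.
    intros x y Hx Hy. pose proof (Hfc x); pose proof (Hfc y).
    replace (/ f x - / f y) with ((f y - f x) / (f x * f y)) by (field; lra).
    unfold Rdiv. rewrite Rabs_mult, Rabs_inv, (Rabs_right (f x * f y)) by nra.
    rewrite <- Rabs_Ropp, Ropp_minus_distr.
    assert (/ (f x * f y) <= / (c * c)) by (apply Rinv_le_contravar; nra).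
    assert (0 <= w (Rabs (x - y))) by (apply Hg; apply Rabs_pos).
    specialize (H x y Hx Hy).
    assert (0 < / (f x * f y)) by (apply Rinv_0_lt_compat; nra).
    apply Rle_trans with (M * w (Rabs (x - y)) * / (f x * f y)). apply Rmult_le_compat_r; lra.
    replace (M * / (c * c) * w (Rabs (x - y))) with (M * w (Rabs (x - y)) * / (c*c)) by ring.
    apply Rmult_le_compat_l; nra.
  - pose proof (LC_weaken _ _ _ Hg Hf) as Hf0.
    apply LC_S in Hf as [Hf1 Hf2]. apply LC_S. split.
    + intros x. apply ex_derive_inv; auto. pose proof (Hfc x). lra.
    + apply LC_ext with (fun x => (-1) * (Derive f x * ((/ f x) * (/ f x)))).
      intros x. rewrite Derive_inv; auto. field. pose proof (Hfc x); lra. pose proof (Hfc x); lra.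
      apply LC_scal; auto. apply LC_mult; auto. apply LC_mult; auto.
Qed.

Lemma locH_id_w w D : good w -> locH (fun t => t) D -> locH w D.
Proof.
  intros Hg H. apply lip_locH; [exact Hg|]. intros p q. destruct (H p q) as [M [HM H']].
  exists M; split; auto.
Qed.

Lemma LC_id_w w n f : good w -> LC (fun t => t) n f -> LC w n f.
Proof. intros Hg [H1 H2]. split; auto. apply locH_id_w; auto. Qed.

Lemma is_derive_affine a b x : is_derive (fun x => a * x + b) x a.
Proof. auto_derive; auto; ring. Qed.

Lemma LC_affine n f a b : LC (fun t => t) n f -> LC (fun t => t) n (fun x => f (a * x + b)).
Proof.
  revert f. induction n; intros f Hf.
  - apply LC_0 in Hf. apply LC_0. intros p q.
    destruct (Hf (Rmin (a*p+b) (a*q+b)) (Rmax (a*p+b) (a*q+b))) as [M [HM H]].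
    exists (M * Rabs a). split. apply Rmult_le_pos; auto. apply Rabs_pos.
    intros x y Hx Hy.
    assert (Hin : forall z, p <= z <= q -> Rmin (a*p+b) (a*q+b) <= a*z+b <= Rmax (a*p+b) (a*q+b)).
    { intros z Hz. unfold Rmin, Rmax. destruct (Rle_dec (a*p+b) (a*q+b)); destruct (Rle_dec 0 a); split; nra. }
    eapply Rle_trans. apply H; auto.
    replace (a * x + b - (a * y + b)) with (a * (x - y)) by ring. rewrite Rabs_mult. lra.
  - apply LC_S in Hf as [Hf1 Hf2]. apply LC_S. split.
    + intros x. eexists. apply (is_derive_comp f (fun x => a * x + b)).
      apply Derive_correct; auto.
      apply is_derive_affine.
    + apply LC_ext with (fun x => a * Derive f (a * x + b)).
      intros x. symmetry. apply is_derive_unique.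
      apply (is_derive_comp f (fun x => a * x + b)).
      apply Derive_correct; auto.
      apply is_derive_affine.
      apply LC_scal. apply good_id. apply IHn. auto.
Qed.


Lemma cont_eps_inv (D : R -> R) c : continuous D c ->
  forall eps, 0 < eps -> exists d, 0 < d /\ forall y, Rabs (y - c) < d -> Rabs (D y - D c) < eps.
Proof.
  intros H eps Heps. apply filterlim_locally with (eps := mkposreal eps Heps) in H.
  destruct H as [d Hd]. exists d. split. apply cond_pos.
  intros y Hy. apply (Hd y). exact Hy.
Qed.

Lemma cont_left_zero D c : continuous D c -> (forall y, y < c -> D y = 0) -> D c = 0.
Proof.
  intros H H0. destruct (Req_dec (D c) 0) as [E|E]; auto. exfalso.
  destruct (cont_eps_inv D c H (Rabs (D c) / 2)) as [d [Hd Hd']].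
  { apply Rdiv_lt_0_compat; [apply Rabs_pos_lt; auto | lra]. }
  specialize (Hd' (c - d/2)). rewrite H0 in Hd' by lra.
  rewrite Rminus_0_l, Rabs_Ropp in Hd'.
  assert (Rabs (D c) < Rabs (D c) / 2). apply Hd'.
  replace (c - d/2 - c) with (- (d/2)) by ring. rewrite Rabs_Ropp, Rabs_right; lra.
  pose proof (Rabs_pos (D c)). lra.
Qed.

Lemma cont_right_zero D c : continuous D c -> (forall y, c < y -> D y = 0) -> D c = 0.
Proof.
  intros H H0. destruct (Req_dec (D c) 0) as [E|E]; auto. exfalso.
  destruct (cont_eps_inv D c H (Rabs (D c) / 2)) as [d [Hd Hd']].
  { apply Rdiv_lt_0_compat; [apply Rabs_pos_lt; auto | lra]. }
  specialize (Hd' (c + d/2)). rewrite H0 in Hd' by lra.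
  rewrite Rminus_0_l, Rabs_Ropp in Hd'.
  assert (Rabs (D c) < Rabs (D c) / 2). apply Hd'.
  replace (c + d/2 - c) with (d/2) by ring. rewrite Rabs_right; lra.
  pose proof (Rabs_pos (D c)). lra.
Qed.

Lemma Derive_n_zero k y : Derive_n (fun _ => 0) k y = 0.
Proof. destruct k. reflexivity. apply Derive_n_const. Qed.

Lemma zero_derivs_left w m f c : good w -> LC w m f -> (forall y, y < c -> f y = 0) ->
  forall k, (k <= m)%nat -> Derive_n f k c = 0.
Proof.
  intros Hg Hf H0 k Hk. apply cont_left_zero.
  apply (LC_cont w m f Hg Hf k Hk).
  intros y Hy. rewrite (Derive_n_ext_loc f (fun _ => 0)). apply Derive_n_zero.
  assert (Hp : 0 < c - y) by lra. exists (mkposreal _ Hp). intros z Hz.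
  apply H0. unfold ball in Hz; simpl in Hz; unfold AbsRing_ball in Hz; simpl in Hz.
  unfold abs, minus, plus, opp in Hz; simpl in Hz. apply Rabs_lt_between in Hz. lra.
Qed.

Lemma zero_derivs_right w m f c : good w -> LC w m f -> (forall y, c < y -> f y = 0) ->
  forall k, (k <= m)%nat -> Derive_n f k c = 0.
Proof.
  intros Hg Hf H0 k Hk. apply cont_right_zero.
  apply (LC_cont w m f Hg Hf k Hk).
  intros y Hy. rewrite (Derive_n_ext_loc f (fun _ => 0)). apply Derive_n_zero.
  assert (Hp : 0 < y - c) by lra. exists (mkposreal _ Hp). intros z Hz.
  apply H0. unfold ball in Hz; simpl in Hz; unfold AbsRing_ball in Hz; simpl in Hz.
  unfold abs, minus, plus, opp in Hz; simpl in Hz. apply Rabs_lt_between in Hz. lra.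
Qed.

Lemma flat_at m f c : LC (fun t => t) m f -> (forall k, (k <= m)%nat -> Derive_n f k c = 0) ->
  exists C, 0 <= C /\ forall k, (k <= m)%nat -> forall s, Rabs (s - c) <= 1 ->
    Rabs (Derive_n f k s) <= C * Rabs (s - c) ^ (S m - k).
Proof.
  intros [H1 H2] H0. destruct (H2 (c - 1) (c + 1)) as [C [HC HC']].
  exists C. split; auto.
  assert (forall j, (j <= m)%nat -> forall s, Rabs (s - c) <= 1 ->
    Rabs (Derive_n f (m - j) s) <= C * Rabs (s - c) ^ (S m - (m - j))).
  { induction j; intros Hj s Hs.
    - replace (m - 0)%nat with m by lia. replace (S m - m)%nat with 1%nat by lia.
      rewrite pow_1. apply Rabs_le_between' in Hs.
      specialize (HC' s c ltac:(lra) ltac:(lra)). rewrite H0 in HC' by lia.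
      rewrite Rminus_0_r in HC'. exact HC'.
    - set (k := (m - S j)%nat). assert (Hk : (k < m)%nat) by lia.
      assert (Ek : (m - j)%nat = S k) by lia.
      assert (Hb : forall z, Rmin s c <= z <= Rmax s c -> Rabs (Derive (Derive_n f k) z) <= C * Rabs (s - c) ^ (S m - S k)).
      { intros z Hz. change (Derive (Derive_n f k) z) with (Derive_n f (S k) z). rewrite <- Ek.
        assert (Hzc : Rabs (z - c) <= Rabs (s - c)).
        { unfold Rmin, Rmax in Hz. destruct (Rle_dec s c); apply Rabs_le_between' ; split;
          try (apply Rabs_le_between' in Hs); rewrite ?Rabs_left1, ?Rabs_right by lra; lra. }
        eapply Rle_trans. apply IHj. lia. lra. rewrite Ek.
        apply Rmult_le_compat_l; auto. apply pow_incr. split; auto. apply Rabs_pos. }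
      pose proof (mvt_lip (Derive_n f k) (Rmin s c) (Rmax s c) _ (H1 k Hk) Hb s c) as HM.
      rewrite (H0 k) in HM by lia. rewrite Rminus_0_r in HM. fold k.
      eapply Rle_trans. apply HM.
      split; [apply Rmin_l | apply Rmax_l]. split; [apply Rmin_r | apply Rmax_r].
      replace (S m - k)%nat with (S (S m - S k)) by lia. simpl. lra. }
  intros k Hk s Hs. replace k with (m - (m - k))%nat by lia. apply H. lia. auto.
Qed.

Definition Bp (j : nat) (t : R) : R := (Rmax t 0) ^ j.

Lemma Bp_neg j t : (0 < j)%nat -> t <= 0 -> Bp j t = 0.
Proof.
  intros Hj Ht. unfold Bp. rewrite Rmax_right by lra. destruct j. lia. simpl. ring.
Qed.

Lemma Bp_nonneg j t : 0 <= Bp j t.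
Proof. unfold Bp. apply pow_le. apply Rmax_r. Qed.

Lemma Bp_deriv j t : (0 < j)%nat -> is_derive (Bp (S j)) t (INR (S j) * Bp j t).
Proof.
  intros Hj. destruct (Rlt_dec 0 t) as [Ht|Ht]; [|destruct (Rlt_dec t 0) as [Ht'|Ht']].
  - apply is_derive_ext_loc with (fun y => y ^ (S j)).
    exists (mkposreal _ Ht). intros y Hy.
    unfold ball in Hy; simpl in Hy; unfold AbsRing_ball in Hy; simpl in Hy.
    unfold abs, minus, plus, opp in Hy; simpl in Hy. apply Rabs_lt_between in Hy.
    unfold Bp. rewrite Rmax_left by lra. auto.
    unfold Bp. rewrite Rmax_left by lra.
    auto_derive; auto. simpl. ring.
  - apply is_derive_ext_loc with (fun _ => 0).
    assert (Hp : 0 < - t) by lra.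
    exists (mkposreal _ Hp). intros y Hy.
    unfold ball in Hy; simpl in Hy; unfold AbsRing_ball in Hy; simpl in Hy.
    unfold abs, minus, plus, opp in Hy; simpl in Hy. apply Rabs_lt_between in Hy.
    rewrite Bp_neg; auto. lra.
    rewrite Bp_neg by (auto || lra). rewrite Rmult_0_r. auto_derive; auto.
  - assert (t = 0) by lra. subst t. apply deriv_eps. intros eps Heps.
    exists (Rmin eps 1). split. apply Rmin_pos; lra. intros y Hy.
    rewrite (Bp_neg (S j) 0), (Bp_neg j 0) by (auto || lra).
    rewrite Rminus_0_r in *. rewrite Rmult_0_r, Rmult_0_l, !Rminus_0_r.
    assert (Hy1 : Rabs y < eps) by (apply Rlt_le_trans with (Rmin eps 1); [auto|apply Rmin_l]).
    assert (Hy2 : Rabs y < 1) by (apply Rlt_le_trans with (Rmin eps 1); [auto|apply Rmin_r]).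
    unfold Bp. rewrite Rabs_right by (apply Rle_ge, pow_le, Rmax_r).
    assert (Hm : Rmax y 0 <= Rabs y) by (apply Rmax_lub; [apply Rle_abs | apply Rabs_pos]).
    assert (H0m : 0 <= Rmax y 0) by apply Rmax_r.
    simpl. destruct j. lia.
    assert (Rmax y 0 ^ S j <= Rabs y).
    { simpl. assert (Rmax y 0 ^ j <= 1). { replace 1 with (1 ^ j) by apply pow1. apply pow_incr. lra. }
      assert (0 <= Rmax y 0 ^ j) by (apply pow_le; lra). nra. }
    assert (0 <= Rmax y 0 ^ S j) by (apply pow_le; lra). nra.
Qed.

Lemma LC_Bp j : LC (fun t => t) j (Bp (S j)).
Proof.
  induction j.
  - apply LC_0. intros p q. exists 1. split. lra. intros x y _ _. unfold Bp. rewrite !pow_1.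
    rewrite Rmult_1_l. pose proof (Rle_abs (x-y)) as A1; pose proof (Rle_abs (y-x)) as A2.
    rewrite Rabs_minus_sym in A2.
    unfold Rmax. destruct (Rle_dec x 0), (Rle_dec y 0); apply Rabs_le; split; lra.
  - apply LC_S. split.
    + intros x. eexists. apply Bp_deriv. lia.
    + apply LC_ext with (fun x => INR (S (S j)) * Bp (S j) x).
      intros x. symmetry. apply is_derive_unique. apply Bp_deriv. lia.
      apply LC_scal. apply good_id. auto.
Qed.

Definition Sst (m : nat) (t : R) : R := Bp (S m) t / (Bp (S m) t + Bp (S m) (1 - t)).

Lemma Sst_den m t : (/ 2) ^ (S m) <= Bp (S m) t + Bp (S m) (1 - t).
Proof.
  pose proof (Bp_nonneg (S m) t). pose proof (Bp_nonneg (S m) (1 - t)).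
  destruct (Rle_dec (/2) t).
  - assert ((/2) ^ (S m) <= Bp (S m) t). { unfold Bp. apply pow_incr. split. lra.
      apply Rle_trans with t; auto. apply Rmax_l. } lra.
  - assert ((/2) ^ (S m) <= Bp (S m) (1 - t)). { unfold Bp. apply pow_incr. split. lra.
      apply Rle_trans with (1 - t); [lra | apply Rmax_l]. } lra.
Qed.

Lemma LC_Sst m : LC (fun t => t) m (Sst m).
Proof.
  unfold Sst. apply LC_ext with (fun t => Bp (S m) t * / (Bp (S m) t + Bp (S m) ((-1) * t + 1))).
  intros t. unfold Rdiv. replace ((-1) * t + 1) with (1 - t) by ring. reflexivity.
  apply LC_mult. apply good_id. apply LC_Bp.
  apply LC_inv with ((/2) ^ (S m)). apply good_id. apply pow_lt; lra.
  intros x. replace ((-1) * x + 1) with (1 - x) by ring. apply Sst_den.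
  apply LC_plus. apply good_id. apply LC_Bp. apply (LC_affine m (Bp (S m)) (-1) 1). apply LC_Bp.
Qed.

Lemma Sst_0 m t : t <= 0 -> Sst m t = 0.
Proof. intros Ht. unfold Sst. rewrite Bp_neg by (lia || lra). unfold Rdiv. ring. Qed.

Lemma Sst_1 m t : 1 <= t -> Sst m t = 1.
Proof.
  intros Ht. unfold Sst. rewrite (Bp_neg _ (1 - t)) by (lia || lra).
  rewrite Rplus_0_r. field. pose proof (Sst_den m t). rewrite (Bp_neg _ (1 - t)) in H by (lia || lra).
  pose proof (pow_lt (/2) (S m) ltac:(lra)). lra.
Qed.

Lemma Derive_plus_const f c x : Derive (fun t => f t + c) x = Derive f x.
Proof.
  unfold Derive. f_equal. apply Lim_ext. intros y. f_equal. ring.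
Qed.

Lemma Derive_n_plus_const f c k x : Derive_n (fun t => f t + c) (S k) x = Derive_n f (S k) x.
Proof.
  rewrite !Derive_n_S. apply Derive_n_ext. intros t. apply Derive_plus_const.
Qed.

Lemma Sst_flat m : exists C, 0 <= C /\ forall k, (k <= m)%nat -> forall s, 0 <= s <= 1 ->
  Rabs (Derive_n (Sst m) k s) <= C * s ^ (S m - k) /\
  ((0 < k)%nat -> Rabs (Derive_n (Sst m) k s) <= C * (1 - s) ^ (S m - k)) /\
  Rabs (Sst m s - 1) <= C * (1 - s) ^ (S m).
Proof.
  destruct (flat_at m (Sst m) 0 (LC_Sst m)) as [C0 [HC0 H0]].
  { apply zero_derivs_left with (fun t => t). apply good_id. apply LC_Sst. intros; apply Sst_0; lra. }
  assert (L1 : LC (fun t => t) m (fun t => Sst m t + -1)).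
  { apply LC_plus. apply good_id. apply LC_Sst. apply LC_const, good_id. }
  destruct (flat_at m (fun t => Sst m t + -1) 1 L1) as [C1 [HC1 H1]].
  { apply zero_derivs_right with (fun t => t). apply good_id. auto. intros; rewrite Sst_1; lra. }
  exists (Rmax C0 C1). split. apply Rle_trans with C0; auto; apply Rmax_l.
  intros k Hk s Hs. repeat split.
  - pose proof (H0 k Hk s) as H0'. rewrite Rminus_0_r, Rabs_right in H0' by lra.
    eapply Rle_trans. apply H0'; lra.
    apply Rmult_le_compat_r. apply pow_le; lra. apply Rmax_l.
  - intros Hk0. destruct k. lia. rewrite <- (Derive_n_plus_const _ (-1)).
    pose proof (H1 (S k) Hk s) as H1'. rewrite Rabs_left1 in H1' by lra.
    replace (- (s - 1)) with (1 - s) in H1' by ring.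
    eapply Rle_trans. apply H1'. lra.
    apply Rmult_le_compat_r. apply pow_le; lra. apply Rmax_r.
  - pose proof (H1 O ltac:(lia) s) as H1'. simpl in H1'.
    replace (Sst m s - 1) with (Sst m s + -1) by ring.
    eapply Rle_trans. apply H1'. rewrite Rabs_left1 by lra. lra.
    rewrite Rabs_left1 by lra. replace (- (s - 1)) with (1 - s) by ring.
    replace (S m - 0)%nat with (S m) by lia.
    apply Rmult_le_compat_r. apply pow_le; lra. apply Rmax_r.
Qed.


Lemma locally_of (x : R) (P : R -> Prop) :
  (exists d, 0 < d /\ forall y, Rabs (y - x) < d -> P y) -> locally x P.
Proof.
  intros [d [Hd H]]. exists (mkposreal d Hd). intros y Hy. apply H. exact Hy.
Qed.

Section Gap.
Variable K : R -> Prop.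
Variables lo hi : R.
Hypothesis HKc : closed_set K.
Hypothesis Hlo : K lo.
Hypothesis Hhi : K hi.
Hypothesis Hb : forall x, K x -> lo <= x <= hi.

Definition lft (x : R) : R := real (Lub_Rbar (fun k => K k /\ k <= x)).
Definition rgt (x : R) : R := real (Glb_Rbar (fun k => K k /\ x <= k)).

Lemma lft_spec x : lo <= x -> K (lft x) /\ lft x <= x /\ forall k, K k -> k <= x -> k <= lft x.
Proof.
  intros Hx. unfold lft. destruct (Lub_Rbar_correct (fun k => K k /\ k <= x)) as [Hub Hl].
  assert (H1 : Rbar_le lo (Lub_Rbar (fun k => K k /\ k <= x))) by (apply Hub; auto).
  assert (H2 : Rbar_le (Lub_Rbar (fun k => K k /\ k <= x)) x).
  { apply Hl. intros y [_ Hy]. simpl. auto. }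
  destruct (Lub_Rbar (fun k => K k /\ k <= x)) as [r| |] eqn:E; simpl in *; try contradiction.
  assert (Hub' : forall k, K k -> k <= x -> k <= r) by (intros k Hk Hkx; apply (Hub k); auto).
  split; [|split; auto].
  apply NNPP. intros HK. destruct (HKc r HK) as [d Hd].
  assert (Hnot : ~ (forall k, K k -> k <= x -> k <= r - d/2)).
  { intros Hall. assert (r <= r - d/2). { apply (Hl (Finite (r - d/2))). intros y [Hy1 Hy2]. simpl. auto. }
    pose proof (cond_pos d). lra. }
  apply Hnot. intros k Hk Hkx. apply Rnot_lt_le. intros Hlt.
  assert (Hkr : k <= r) by auto.
  apply (Hd k). unfold disc. rewrite Rabs_left1 by lra. lra. auto.
Qed.

Lemma rgt_spec x : x <= hi -> K (rgt x) /\ x <= rgt x /\ forall k, K k -> x <= k -> rgt x <= k.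
Proof.
  intros Hx. unfold rgt. destruct (Glb_Rbar_correct (fun k => K k /\ x <= k)) as [Hlb Hl].
  assert (H1 : Rbar_le (Glb_Rbar (fun k => K k /\ x <= k)) hi) by (apply Hlb; auto).
  assert (H2 : Rbar_le x (Glb_Rbar (fun k => K k /\ x <= k))).
  { apply Hl. intros y [_ Hy]. simpl. auto. }
  destruct (Glb_Rbar (fun k => K k /\ x <= k)) as [r| |] eqn:E; simpl in *; try contradiction.
  assert (Hlb' : forall k, K k -> x <= k -> r <= k) by (intros k Hk Hkx; apply (Hlb k); auto).
  split; [|split; auto].
  apply NNPP. intros HK. destruct (HKc r HK) as [d Hd].
  assert (Hnot : ~ (forall k, K k -> x <= k -> r + d/2 <= k)).
  { intros Hall. assert (r + d/2 <= r). { apply (Hl (Finite (r + d/2))). intros y [Hy1 Hy2]. simpl. auto. }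
    pose proof (cond_pos d). lra. }
  apply Hnot. intros k Hk Hkx. apply Rnot_lt_le. intros Hlt.
  assert (Hkr : r <= k) by auto.
  apply (Hd k). unfold disc. rewrite Rabs_right by lra. lra. auto.
Qed.

Definition gapP (x : R) : Prop := ~ K x /\ lo < x < hi.

Lemma gap_lr x : gapP x -> K (lft x) /\ K (rgt x) /\ lft x < x < rgt x /\
  forall z, lft x < z < rgt x -> ~ K z.
Proof.
  intros [HK Hx]. destruct (lft_spec x ltac:(lra)) as [L1 [L2 L3]].
  destruct (rgt_spec x ltac:(lra)) as [R1 [R2 R3]].
  assert (lft x <> x) by (intros E; rewrite E in L1; auto).
  assert (rgt x <> x) by (intros E; rewrite E in R1; auto).
  repeat split; auto; try lra.
  intros z Hz Kz. destruct (Rle_dec z x).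
  - specialize (L3 z Kz r). lra.
  - specialize (R3 z Kz ltac:(lra)). lra.
Qed.

Lemma gap_same x y : gapP x -> lft x < y < rgt x -> gapP y /\ lft y = lft x /\ rgt y = rgt x.
Proof.
  intros Hg Hy. destruct (gap_lr x Hg) as [K1 [K2 [H3 H4]]].
  destruct (lft_spec x ltac:(destruct Hg; lra)) as [_ [_ _]].
  assert (Hlo1 : lo <= lft x) by (apply Hb; auto).
  assert (Hhi1 : rgt x <= hi) by (apply Hb; auto).
  assert (Gy : gapP y) by (split; [apply H4; auto | lra]).
  split; auto.
  destruct (lft_spec y ltac:(lra)) as [A1 [A2 A3]].
  destruct (rgt_spec y ltac:(lra)) as [B1 [B2 B3]].
  split.
  - assert (lft x <= lft y) by (apply A3; auto; lra).
    destruct (Rle_lt_or_eq_dec _ _ H); auto. exfalso. apply (H4 (lft y)); auto. lra.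
  - assert (rgt y <= rgt x) by (apply B3; auto; lra).
    destruct (Rle_lt_or_eq_dec _ _ H); auto. exfalso. apply (H4 (rgt y)); auto. lra.
Qed.

Lemma no_K_between x y : x <= y -> lo <= x -> y <= hi -> (forall z, x <= z <= y -> ~ K z) ->
  gapP x /\ gapP y /\ lft y = lft x /\ rgt y = rgt x.
Proof.
  intros Hxy Hx Hy HnK.
  assert (Gx : gapP x).
  { split. apply HnK; lra. split.
    destruct (Rle_lt_or_eq_dec _ _ Hx) as [E|E]; auto. exfalso; apply (HnK lo); auto; lra.
    destruct (Rle_lt_or_eq_dec x hi) as [E|E]; try lra. exfalso; apply (HnK hi); auto; lra. }
  destruct (gap_lr x Gx) as [K1 [K2 [H3 H4]]].
  assert (rgt x > y).
  { apply Rnot_le_lt. intros Hr. apply (HnK (rgt x)); auto. lra. }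
  destruct (gap_same x y Gx ltac:(lra)) as [Gy [E1 E2]]. auto.
Qed.

End Gap.


Definition jet (k : nat) (v : R) : R := match k with O => v | S _ => 0 end.

Lemma wmono_pow w j s t : good w -> 0 <= s <= t -> w s * s ^ j <= w t * t ^ j.
Proof.
  intros [w0 [wp [wm _]]] H. apply Rmult_le_compat. apply wp; lra. apply pow_le; lra.
  apply wm; lra. apply pow_incr; lra.
Qed.

Lemma core_bound w Cu Cs k j L d D X : good w ->
  (forall d L, 0 < d <= L -> d * w L <= L * w d) ->
  0 <= Cu -> 0 <= Cs -> 0 < d <= L ->
  Rabs D <= Cu * w L * L ^ (k + j) -> Rabs X <= Cs * (d / L) ^ (S j) ->
  Rabs (D / L ^ k * X) <= Cu * Cs * w d * d ^ j.
Proof.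
  intros Hg Hr HCu HCs Hd HD HX.
  assert (HL : 0 < L) by lra.
  assert (HLk : 0 < L ^ k) by (apply pow_lt; lra).
  assert (wLp : 0 <= w L) by (apply Hg; lra).
  assert (wdp : 0 <= w d) by (apply Hg; lra).
  unfold Rdiv. rewrite !Rabs_mult, Rabs_inv, (Rabs_right (L ^ k)) by lra.
  apply Rle_trans with (Cu * w L * L ^ (k + j) * / L ^ k * (Cs * (d / L) ^ S j)).
  { apply Rmult_le_compat. apply Rmult_le_pos. apply Rabs_pos. left; apply Rinv_0_lt_compat; auto.
    apply Rabs_pos. apply Rmult_le_compat_r. left; apply Rinv_0_lt_compat; auto. auto. auto. }
  rewrite pow_add. unfold Rdiv. rewrite <- tech_pow_Rmult, Rpow_mult_distr, pow_inv.
  assert (HLj : 0 < L ^ j) by (apply pow_lt; lra).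
  replace (Cu * w L * (L ^ k * L ^ j) * / L ^ k * (Cs * (d * / L * (d ^ j * / L ^ j))))
    with (Cu * Cs * (d * w L / L) * d ^ j) by (field; lra).
  assert (d * w L / L <= w d).
  { apply Rmult_le_reg_r with L; auto. unfold Rdiv. rewrite Rmult_assoc, Rinv_l, Rmult_1_r by lra.
    pose proof (Hr d L Hd); lra. }
  assert (0 <= d ^ j) by (apply pow_le; lra).
  assert (0 <= Cu * Cs) by (apply Rmult_le_pos; auto).
  apply Rmult_le_compat_r; auto. apply Rmult_le_compat_l; auto.
Qed.

Lemma is_derive_c (c x : R) : is_derive (fun _ : R => c) x 0.
Proof. auto_derive; auto. Qed.

Lemma is_derive_comp_aff f a b x df : is_derive f (a * x + b) df ->
  is_derive (fun y => f (a * y + b)) x (a * df).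
Proof.
  intros H. apply (is_derive_comp f (fun y => a * y + b)). auto. apply is_derive_affine.
Qed.

Section Psi.
Variable K : R -> Prop.
Variables lo hi : R.
Hypothesis HKc : closed_set K.
Hypothesis Hlo : K lo.
Hypothesis Hhi : K hi.
Hypothesis Hb : forall x, K x -> lo <= x <= hi.
Variable w : R -> R.
Hypothesis Hg : good w.
Hypothesis Hratio : forall d L, 0 < d <= L -> d * w L <= L * w d.
Variable m : nat.
Hypothesis Hm : (1 <= m)%nat.
Variable u : R -> R.
Variable Cu : R.
Hypothesis HCu : 0 <= Cu.
Hypothesis Hu : forall a b, K a -> K b -> Rabs (u b - u a) <= Cu * w (Rabs (b - a)) * Rabs (b - a) ^ m.

Let lf := lft K.
Let rg := rgt K.
Definition proj (x : R) : R := Rmax lo (Rmin x hi).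
Let DS (k : nat) (s : R) : R := Derive_n (Sst m) k s.

Definition Phi (k : nat) (x : R) : R :=
  if excluded_middle_informative (gapP K lo hi x) then
    jet k (u (lf x)) + (u (rg x) - u (lf x)) / (rg x - lf x) ^ k * DS k ((x - lf x) / (rg x - lf x))
  else jet k (u (proj x)).

Lemma Phi_gap k x : gapP K lo hi x -> Phi k x =
  jet k (u (lf x)) + (u (rg x) - u (lf x)) / (rg x - lf x) ^ k * DS k ((x - lf x) / (rg x - lf x)).
Proof. intros H. unfold Phi. destruct (excluded_middle_informative _); tauto. Qed.

Lemma Phi_ngap k x : ~ gapP K lo hi x -> Phi k x = jet k (u (proj x)).
Proof. intros H. unfold Phi. destruct (excluded_middle_informative _); tauto. Qed.

Lemma Phi_K k x : K x -> Phi k x = jet k (u x).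
Proof.
  intros Hx. rewrite Phi_ngap. unfold proj. destruct (Hb x Hx).
  rewrite Rmin_left, Rmax_right by lra. auto. intros [H _]; auto.
Qed.

Lemma Phi_lo k x : x <= lo -> Phi k x = Phi k lo.
Proof.
  intros Hx. rewrite (Phi_K k lo Hlo). rewrite Phi_ngap. unfold proj.
  destruct (Hb lo Hlo). rewrite Rmin_left, Rmax_left by lra. auto.
  intros [_ H]. lra.
Qed.

Lemma Phi_hi k x : hi <= x -> Phi k x = Phi k hi.
Proof.
  intros Hx. rewrite (Phi_K k hi Hhi). rewrite Phi_ngap. unfold proj.
  destruct (Hb hi Hhi). rewrite Rmin_right, Rmax_right by lra. auto.
  intros [_ H]. lra.
Qed.

Lemma u_gap_bound x : gapP K lo hi x -> forall k j, (k + j = m)%nat ->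
  Rabs (u (rg x) - u (lf x)) <= Cu * w (rg x - lf x) * (rg x - lf x) ^ (k + j).
Proof.
  intros Hx k j Hkj. unfold lf, rg in *. destruct (gap_lr K lo hi HKc Hlo Hhi x Hx) as [K1 [K2 [H3 _]]].
  rewrite Hkj. eapply Rle_trans. apply Hu; auto. rewrite Rabs_right by lra. apply Rle_refl.
Qed.

Lemma E_K : forall k x z, (k <= m)%nat -> K x -> K z ->
  Rabs (Phi k z - Phi k x) <= Cu * w (Rabs (z - x)) * Rabs (z - x) ^ (m - k).
Proof.
  intros k x z Hk Hx Hz. rewrite !Phi_K by auto. destruct k.
  - simpl. replace (m - 0)%nat with m by lia. auto.
  - simpl. rewrite Rminus_0_r, Rabs_R0. apply Rmult_le_pos. apply Rmult_le_pos; auto.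
    apply Hg, Rabs_pos. apply pow_le, Rabs_pos.
Qed.

Lemma E_gap : exists Cs, 0 <= Cs /\ forall k y, (k <= m)%nat -> gapP K lo hi y ->
  Rabs (Phi k y - jet k (u (lf y))) <= Cu * Cs * w (y - lf y) * (y - lf y) ^ (m - k) /\
  Rabs (Phi k y - jet k (u (rg y))) <= Cu * Cs * w (rg y - y) * (rg y - y) ^ (m - k).
Proof.
  destruct (Sst_flat m) as [Cs [HCs HS]]. exists Cs. split; auto.
  intros k y Hk Hy. destruct (gap_lr K lo hi HKc Hlo Hhi y Hy) as [K1 [K2 [H3 _]]].
  fold lf rg in K1, K2, H3.
  set (a := lf y) in *. set (b := rg y) in *. set (L := b - a).
  assert (HL : 0 < L) by (unfold L; lra).
  set (s := (y - a) / L).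
  assert (Hs : 0 <= s <= 1).
  { unfold s. split. apply Rdiv_le_0_compat; lra. apply Rmult_le_reg_r with L; auto.
    unfold Rdiv. rewrite Rmult_assoc, Rinv_l, Rmult_1_r, Rmult_1_l by lra. unfold L; lra. }
  destruct (HS k Hk s Hs) as [S0 [S1 S2]].
  rewrite Phi_gap by auto. fold a b L. fold s.
  pose proof (u_gap_bound y Hy k (m - k) ltac:(lia)) as HD. fold a b L in HD.
  split.
  - replace (jet k (u a) + (u b - u a) / L ^ k * DS k s - jet k (u a)) with ((u b - u a) / L ^ k * DS k s) by ring.
    apply core_bound; auto. split; unfold L; lra.
    replace (S m - k)%nat with (S (m - k)) in S0 by lia. auto.
  - destruct k.
    + simpl jet. replace (u a + (u b - u a) / L ^ 0 * DS 0 s - u b) with ((u b - u a) / L ^ 0 * (Sst m s - 1))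
        by (unfold DS; simpl; field).
      apply core_bound; auto. split; unfold L; lra.
      replace ((b - y) / L) with (1 - s) by (unfold s, L; field; lra).
      replace (S (m - 0)) with (S m) by lia. exact S2.
    + simpl jet. replace (0 + (u b - u a) / L ^ S k * DS (S k) s - 0) with ((u b - u a) / L ^ S k * DS (S k) s) by ring.
      apply core_bound; auto. split; unfold L; lra.
      replace ((b - y) / L) with (1 - s) by (unfold s, L; field; lra).
      replace (S m - S k)%nat with (S (m - S k)) in S1 by lia.
      apply S1. lia.
Qed.

Lemma E_main : exists C2, 0 <= C2 /\ forall k x y, (k <= m)%nat -> K x ->
  Rabs (Phi k y - Phi k x) <= C2 * w (Rabs (y - x)) * Rabs (y - x) ^ (m - k).
Proof.
  destruct E_gap as [Cs [HCs HE]]. exists (Cu * Cs + Cu). split. nra.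
  intros k x y Hk Hx.
  assert (Mon : forall s, 0 <= s <= Rabs (y - x) -> w s * s ^ (m - k) <= w (Rabs (y - x)) * Rabs (y - x) ^ (m - k)).
  { intros s Hs. apply wmono_pow; auto. }
  assert (Pos : 0 <= w (Rabs (y - x)) * Rabs (y - x) ^ (m - k)).
  { apply Rmult_le_pos. apply Hg, Rabs_pos. apply pow_le, Rabs_pos. }
  assert (Cs0 : 0 <= Cu * Cs) by nra.
  destruct (classic (gapP K lo hi y)) as [Gy|Gy].
  - destruct (gap_lr K lo hi HKc Hlo Hhi y Gy) as [K1 [K2 [H3 H4]]]. fold lf rg in K1, K2, H3, H4.
    destruct (HE k y Hk Gy) as [EL ER].
    assert (x <= lf y \/ rg y <= x).
    { destruct (Rle_dec x (lf y)); auto. destruct (Rle_dec (rg y) x); auto.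
      exfalso. apply (H4 x); auto; lra. }
    destruct H as [H|H].
    + pose proof (E_K k x (lf y) Hk Hx K1) as EK. rewrite (Phi_K k (lf y)) in EK by auto.
      replace (Phi k y - Phi k x) with ((Phi k y - jet k (u (lf y))) + (jet k (u (lf y)) - Phi k x)) by ring.
      eapply Rle_trans. apply Rabs_triang.
      assert (Rabs (y - x) = y - x) by (apply Rabs_right; lra).
      assert (Rabs (lf y - x) = lf y - x) by (apply Rabs_right; lra).
      rewrite H1 in EK.
      pose proof (Mon (y - lf y) ltac:(lra)). pose proof (Mon (lf y - x) ltac:(lra)).
      rewrite Rmult_assoc in EL, EK.
      assert (Cu * Cs * (w (y - lf y) * (y - lf y) ^ (m - k)) <= Cu * Cs * (w (Rabs (y - x)) * Rabs (y - x) ^ (m - k))) by (apply Rmult_le_compat_l; auto).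
      assert (Cu * (w (lf y - x) * (lf y - x) ^ (m - k)) <= Cu * (w (Rabs (y - x)) * Rabs (y - x) ^ (m - k))) by (apply Rmult_le_compat_l; auto).
      nra.
    + pose proof (E_K k x (rg y) Hk Hx K2) as EK. rewrite (Phi_K k (rg y)) in EK by auto.
      replace (Phi k y - Phi k x) with ((Phi k y - jet k (u (rg y))) + (jet k (u (rg y)) - Phi k x)) by ring.
      eapply Rle_trans. apply Rabs_triang.
      assert (Rabs (y - x) = x - y) by (rewrite Rabs_left1; lra).
      assert (Rabs (rg y - x) = x - rg y) by (rewrite Rabs_left1; lra).
      rewrite H1 in EK.
      pose proof (Mon (rg y - y) ltac:(lra)). pose proof (Mon (x - rg y) ltac:(lra)).
      rewrite Rmult_assoc in ER, EK.
      assert (Cu * Cs * (w (rg y - y) * (rg y - y) ^ (m - k)) <= Cu * Cs * (w (Rabs (y - x)) * Rabs (y - x) ^ (m - k))) by (apply Rmult_le_compat_l; auto).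
      assert (Cu * (w (x - rg y) * (x - rg y) ^ (m - k)) <= Cu * (w (Rabs (y - x)) * Rabs (y - x) ^ (m - k))) by (apply Rmult_le_compat_l; auto).
      nra.
  - destruct (classic (K y)) as [Ky|Ky].
    + eapply Rle_trans. apply E_K; auto. rewrite !Rmult_assoc. apply Rmult_le_compat_r; auto; lra.
    + destruct (Hb x Hx).
      assert (y < lo \/ hi < y).
      { destruct (Rlt_dec y lo); auto. destruct (Rlt_dec hi y); auto. exfalso.
        destruct (Req_dec y lo). subst; auto. destruct (Req_dec y hi). subst; auto.
        apply Gy. split; auto. lra. }
      destruct H1.
      * rewrite (Phi_lo k y) by lra. pose proof (E_K k x lo Hk Hx Hlo) as EK.
        assert (A1 : Rabs (lo - x) <= Rabs (y - x)) by (rewrite !Rabs_left1 by lra; lra).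
        pose proof (Mon (Rabs (lo - x)) (conj (Rabs_pos _) A1)) as A2.
        rewrite Rmult_assoc in EK.
        assert (Cu * (w (Rabs (lo - x)) * Rabs (lo - x) ^ (m - k)) <= Cu * (w (Rabs (y - x)) * Rabs (y - x) ^ (m - k)))
          by (apply Rmult_le_compat_l; auto).
        rewrite Rmult_assoc. nra.
      * rewrite (Phi_hi k y) by lra. pose proof (E_K k x hi Hk Hx Hhi) as EK.
        assert (A1 : Rabs (hi - x) <= Rabs (y - x)) by (rewrite !Rabs_right by lra; lra).
        pose proof (Mon (Rabs (hi - x)) (conj (Rabs_pos _) A1)) as A2.
        rewrite Rmult_assoc in EK.
        assert (Cu * (w (Rabs (hi - x)) * Rabs (hi - x) ^ (m - k)) <= Cu * (w (Rabs (y - x)) * Rabs (y - x) ^ (m - k)))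
          by (apply Rmult_le_compat_l; auto).
        rewrite Rmult_assoc. nra.
Qed.


Lemma jet_m v : jet m v = 0.
Proof. destruct m. lia. reflexivity. Qed.

Lemma Phi_deriv k x : (k < m)%nat -> is_derive (Phi k) x (Phi (S k) x).
Proof.
  intros Hk.
  destruct (classic (gapP K lo hi x)) as [Gx|Gx].
  - destruct (gap_lr K lo hi HKc Hlo Hhi x Gx) as [K1 [K2 [H3 H4]]].
    set (a := lf x) in *. set (b := rg x) in *. set (L := b - a).
    assert (HL : 0 < L) by (unfold L, a, b, lf, rg; lra).
    apply is_derive_ext_loc with (fun y => jet k (u a) + (u b - u a) / L ^ k * DS k ((/L) * y + (- a / L))).
    + apply locally_of. exists (Rmin (x - a) (b - x)). split. apply Rmin_pos; unfold a, b, lf, rg; lra.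
      intros y Hy.
      assert (Hy1 : Rabs (y - x) < x - a) by (apply Rlt_le_trans with (Rmin (x - a) (b - x)); [auto | apply Rmin_l]).
      assert (Hy2 : Rabs (y - x) < b - x) by (apply Rlt_le_trans with (Rmin (x - a) (b - x)); [auto | apply Rmin_r]).
      apply Rabs_lt_between in Hy1. apply Rabs_lt_between in Hy2.
      destruct (gap_same K lo hi HKc Hlo Hhi Hb x y Gx) as [Gy [E1 E2]].
      { unfold a, b, lf, rg in *. lra. }
      rewrite Phi_gap by auto. unfold lf, rg in *. rewrite E1, E2.
      change (lft K x) with a. change (rgt K x) with b. change (b - a) with L.
      replace (/ L * y + - a / L) with ((y - a) / L) by (field; lra). reflexivity.
    + rewrite (Phi_gap (S k) x Gx). change (lf x) with a. change (rg x) with b. change (b - a) with L.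
      assert (Hd : ex_derive (DS k) ((/ L) * x + (- a / L))).
      { unfold DS. apply (proj1 (LC_Sst m)). auto. }
      apply Derive_correct in Hd.
      apply (is_derive_comp_aff (DS k) (/L) (- a / L) x) in Hd.
      apply (is_derive_scal _ _ ((u b - u a) / L ^ k)) in Hd.
      apply (is_derive_plus (fun _ => jet k (u a))) with (df := 0) in Hd.
      2:{ apply is_derive_c. }
      assert (Heq : jet (S k) (u a) + (u b - u a) / L ^ S k * DS (S k) ((x - a) / L) =
        plus 0 ((u b - u a) / L ^ k * (/ L * Derive (DS k) (/ L * x + - a / L)))).
      { simpl jet. unfold plus; simpl.
        replace (/ L * x + - a / L) with ((x - a) / L) by (field; lra).
        change (DS (S k) ((x - a) / L)) with (Derive (DS k) ((x - a) / L)).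
        simpl pow. field; repeat split; try (apply pow_nonzero); lra. }
      rewrite Heq. eapply is_derive_ext; [|exact Hd]. intros t. reflexivity.
  - destruct (classic (K x)) as [Kx|Kx].
    + rewrite (Phi_K (S k) x Kx). simpl jet. apply deriv_eps.
      destruct E_main as [C2 [HC2 HE]]. intros eps Heps.
      destruct Hg as [_ [wp [_ [_ wc]]]].
      destruct (wc (eps / (C2 + 1))) as [d [Hd Hw]]. apply Rdiv_lt_0_compat; lra.
      exists (Rmin d 1). split. apply Rmin_pos; lra. intros y Hy.
      assert (Hy1 : Rabs (y - x) < d) by (apply Rlt_le_trans with (Rmin d 1); [auto | apply Rmin_l]).
      assert (Hy2 : Rabs (y - x) < 1) by (apply Rlt_le_trans with (Rmin d 1); [auto | apply Rmin_r]).
      rewrite Rmult_0_l, Rminus_0_r.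
      eapply Rle_trans. apply HE; auto. lia.
      specialize (Hw (Rabs (y - x)) (conj (Rabs_pos _) Hy1)).
      replace (m - k)%nat with (S (m - S k)) by lia. simpl.
      assert (Rabs (y - x) ^ (m - S k) <= 1).
      { rewrite <- (pow1 (m - S k)). apply pow_incr. split. apply Rabs_pos. lra. }
      assert (0 <= Rabs (y - x) ^ (m - S k)) by (apply pow_le, Rabs_pos).
      assert (0 <= w (Rabs (y - x))) by (apply wp, Rabs_pos).
      assert (C2 * w (Rabs (y - x)) <= eps).
      { apply Rle_trans with (C2 * (eps / (C2 + 1))). apply Rmult_le_compat_l; lra.
        apply Rmult_le_reg_r with (C2 + 1). lra. field_simplify; nra. }
      pose proof (Rabs_pos (y - x)).
      replace (C2 * w (Rabs (y - x)) * (Rabs (y - x) * Rabs (y - x) ^ (m - S k)))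
        with ((C2 * w (Rabs (y - x))) * (Rabs (y - x) ^ (m - S k)) * Rabs (y - x)) by ring.
      apply Rmult_le_compat_r; auto.
      assert (0 <= C2 * w (Rabs (y - x))) by (apply Rmult_le_pos; auto).
      nra.
    + assert (x < lo \/ hi < x).
      { destruct (Rlt_dec x lo); auto. destruct (Rlt_dec hi x); auto. exfalso.
        destruct (Req_dec x lo). subst; auto. destruct (Req_dec x hi). subst; auto.
        apply Gx. split; auto. lra. }
      destruct H as [H|H].
      * rewrite (Phi_lo (S k) x) by lra. rewrite (Phi_K (S k) lo Hlo). simpl jet.
        apply is_derive_ext_loc with (fun _ => Phi k lo).
        apply locally_of. exists (lo - x). split. lra. intros y Hy. apply Rabs_lt_between in Hy.
        symmetry. apply Phi_lo. lra.
        apply is_derive_c.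
      * rewrite (Phi_hi (S k) x) by lra. rewrite (Phi_K (S k) hi Hhi). simpl jet.
        apply is_derive_ext_loc with (fun _ => Phi k hi).
        apply locally_of. exists (x - hi). split. lra. intros y Hy. apply Rabs_lt_between in Hy.
        symmetry. apply Phi_hi. lra.
        apply is_derive_c.
Qed.

Lemma Phi_holder : exists C3, 0 <= C3 /\ forall x y, Rabs (Phi m x - Phi m y) <= C3 * w (Rabs (x - y)).
Proof.
  destruct E_main as [C2 [HC2 HE]].
  destruct (proj2 (LC_Sst m) 0 1) as [Ls [HLs HLs']].
  destruct Hg as [w0 [wp [wm _]]].
  exists (2 * C2 + Cu * Ls). split. nra.
  assert (Main : forall x y, x <= y -> Rabs (Phi m x - Phi m y) <= (2 * C2 + Cu * Ls) * w (y - x)).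
  { intros x y Hxy.
    assert (wy : 0 <= w (y - x)) by (apply wp; lra).
    assert (C3p : 0 <= Cu * Ls * w (y - x)) by (apply Rmult_le_pos; nra).
    destruct (classic (exists z, (x <= z <= y) /\ K z)) as [[z [Hz Kz]]|NZ].
    - pose proof (HE m z x (le_n m) Kz) as E1. pose proof (HE m z y (le_n m) Kz) as E2.
      rewrite Nat.sub_diag in E1, E2. simpl in E1, E2. rewrite Rmult_1_r in E1, E2.
      assert (w (Rabs (x - z)) <= w (y - x)) by (apply wm; split; [apply Rabs_pos| rewrite Rabs_left1; lra]).
      assert (w (Rabs (y - z)) <= w (y - x)) by (apply wm; split; [apply Rabs_pos| rewrite Rabs_right; lra]).
      replace (Phi m x - Phi m y) with ((Phi m x - Phi m z) - (Phi m y - Phi m z)) by ring.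
      eapply Rle_trans. apply Rabs_triang. rewrite Rabs_Ropp.
      assert (C2 * w (Rabs (x - z)) <= C2 * w (y - x)) by (apply Rmult_le_compat_l; auto).
      assert (C2 * w (Rabs (y - z)) <= C2 * w (y - x)) by (apply Rmult_le_compat_l; auto).
      nra.
    - assert (NK : forall z, x <= z <= y -> ~ K z) by (intros z Hz Kz; apply NZ; eauto).
      destruct (Rlt_dec y lo) as [Hy|Hy].
      { rewrite (Phi_lo m x), (Phi_lo m y) by lra. rewrite Rminus_diag, Rabs_R0. nra. }
      destruct (Rlt_dec hi x) as [Hx|Hx].
      { rewrite (Phi_hi m x), (Phi_hi m y) by lra. rewrite Rminus_diag, Rabs_R0. nra. }
      assert (lo <= x) by (apply Rnot_lt_le; intros Hc; apply (NK lo); auto; lra).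
      assert (y <= hi) by (apply Rnot_lt_le; intros Hc; apply (NK hi); auto; lra).
      destruct (no_K_between K lo hi HKc Hlo Hhi Hb x y Hxy H H0 NK) as [Gx [Gy [E1 E2]]].
      rewrite !Phi_gap by auto.
      destruct (gap_lr K lo hi HKc Hlo Hhi x Gx) as [K1 [K2 [H3 H4]]].
      destruct (gap_lr K lo hi HKc Hlo Hhi y Gy) as [_ [_ [H5 _]]].
      pose proof (u_gap_bound x Gx m 0 ltac:(lia)) as HD.
      unfold lf, rg in *. rewrite E1, E2 in *. rewrite Nat.add_0_r in HD.
      set (a := lft K x) in *. set (b := rgt K x) in *. set (L := b - a) in *.
      assert (HL : 0 < L) by (unfold L; lra).
      simpl jet. rewrite jet_m.
      replace (0 + (u b - u a) / L ^ m * DS m ((x - a) / L) - (0 + (u b - u a) / L ^ m * DS m ((y - a) / L)))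
        with ((u b - u a) / L ^ m * (DS m ((x - a) / L) - DS m ((y - a) / L))) by ring.
      assert (Hs : forall t, a <= t <= b -> 0 <= (t - a) / L <= 1).
      { intros t Ht. split. apply Rdiv_le_0_compat; lra. apply Rmult_le_reg_r with L; auto.
        unfold Rdiv. rewrite Rmult_assoc, Rinv_l, Rmult_1_r, Rmult_1_l by lra. unfold L; lra. }
      pose proof (HLs' ((x - a) / L) ((y - a) / L) (Hs x ltac:(lra)) (Hs y ltac:(lra))) as HS.
      replace ((x - a) / L - (y - a) / L) with (- ((y - x) / L)) in HS by (field; lra).
      rewrite Rabs_Ropp, (Rabs_right ((y - x) / L)) in HS by (apply Rle_ge, Rdiv_le_0_compat; lra).
      assert (HLm : 0 < L ^ m) by (apply pow_lt; lra).
      unfold Rdiv at 1. rewrite !Rabs_mult, Rabs_inv, (Rabs_right (L ^ m)) by lra.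
      apply Rle_trans with (Cu * w L * L ^ m * / L ^ m * (Ls * ((y - x) / L))).
      { apply Rmult_le_compat. apply Rmult_le_pos. apply Rabs_pos. left; apply Rinv_0_lt_compat; auto.
        apply Rabs_pos. apply Rmult_le_compat_r. left; apply Rinv_0_lt_compat; auto. auto. auto. }
      replace (Cu * w L * L ^ m * / L ^ m * (Ls * ((y - x) / L))) with (Cu * Ls * ((y - x) * w L / L)) by (field; lra).
      destruct (Req_dec x y) as [Exy|Exy].
      { subst y. rewrite Rminus_diag. unfold Rdiv. rewrite !Rmult_0_l, Rmult_0_r. nra. }
      assert ((y - x) * w L / L <= w (y - x)).
      { apply Rmult_le_reg_r with L; auto. unfold Rdiv. rewrite Rmult_assoc, Rinv_l, Rmult_1_r by lra.
        pose proof (Hratio (y - x) L ltac:(split; [lra | unfold L; lra])). lra. }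
      assert (0 <= Cu * Ls) by nra.
      assert (Cu * Ls * ((y - x) * w L / L) <= Cu * Ls * w (y - x)) by (apply Rmult_le_compat_l; auto).
      nra. }
  intros x y. destruct (Rle_dec x y).
  - rewrite (Rabs_left1 (x - y)) by lra. replace (- (x - y)) with (y - x) by ring. apply Main; auto.
  - rewrite Rabs_minus_sym, (Rabs_right (x - y)) by lra. apply Main. lra.
Qed.

Lemma psi_exists : exists psi, LC w m psi /\ (forall x, K x -> psi x = u x) /\
  (forall x, K x -> Derive psi x = 0).
Proof.
  exists (Phi 0).
  assert (HD : forall k, (k <= m)%nat -> forall x, Derive_n (Phi 0) k x = Phi k x).
  { induction k; intros Hk x. reflexivity.
    simpl. rewrite (Derive_ext _ (Phi k)) by (intros; apply IHk; lia).
    apply is_derive_unique. apply Phi_deriv. lia. }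
  split; [|split].
  - split.
    + intros k Hk x. apply ex_derive_ext with (Phi k). intros; symmetry; apply HD; lia.
      eexists. apply Phi_deriv. auto.
    + destruct Phi_holder as [C3 [HC3 HH]]. intros p q. exists C3. split; auto.
      intros x y _ _. rewrite !HD by lia. auto.
  - intros x Kx. rewrite Phi_K; auto.
  - intros x Kx. change (Derive (Phi 0) x) with (Derive_n (Phi 0) 1 x). rewrite HD by lia.
    rewrite Phi_K; auto.
Qed.

End Psi.


Lemma Taylor_S n f a x : Taylor (S n) f a x =
  Taylor n f a x + Derive_n f (S n) a / INR (Factorial.fact (S n)) * (x - a) ^ (S n).
Proof. reflexivity. Qed.

Lemma Taylor_at n f a : Taylor n f a a = f a.
Proof.
  induction n. unfold Taylor. simpl. field.
  rewrite Taylor_S, IHn. rewrite Rminus_diag. simpl. ring.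
Qed.

Lemma INR_fact_pos n : 0 < INR (Factorial.fact n).
Proof. apply lt_0_INR. apply Factorial.lt_O_fact. Qed.

Lemma Taylor_deriv0 f a x : is_derive (Taylor 0 f a) x 0.
Proof. unfold Taylor. simpl. auto_derive; auto. Qed.

Lemma Taylor_term_deriv n f a x :
  is_derive (fun x => Derive_n f (S n) a / INR (Factorial.fact (S n)) * (x - a) ^ (S n)) x
    (Derive_n (Derive f) n a / INR (Factorial.fact n) * (x - a) ^ n).
Proof.
  rewrite <- Derive_n_S.
  assert (Hp : is_derive (fun x => x - a) x 1) by (auto_derive; auto).
  apply (is_derive_pow _ (S n)) in Hp.
  apply (is_derive_scal _ _ (Derive_n f (S n) a / INR (Factorial.fact (S n)))) in Hp.
  replace (Derive_n f (S n) a / INR (Factorial.fact n) * (x - a) ^ n) with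
    (Derive_n f (S n) a / INR (Factorial.fact (S n)) * (INR (S n) * 1 * (x - a) ^ Nat.pred (S n))).
  exact Hp.
  rewrite fact_simpl, mult_INR. simpl Nat.pred.
  pose proof (INR_fact_pos n). pose proof (pos_INR n). rewrite S_INR. field. lra.
Qed.

Lemma Taylor_deriv n f a x : is_derive (Taylor (S n) f a) x (Taylor n (Derive f) a x).
Proof.
  revert x. induction n; intros x.
  - pose proof (is_derive_plus _ _ _ _ _ (Taylor_deriv0 f a x) (Taylor_term_deriv 0 f a x)) as H.
    replace (Taylor 0 (Derive f) a x) with (plus 0 (Derive_n (Derive f) 0 a / INR (Factorial.fact 0) * (x - a) ^ 0)).
    eapply is_derive_ext; [|exact H]. intros t; reflexivity.
    unfold plus; simpl. rewrite Rplus_0_l. reflexivity.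
  - pose proof (is_derive_plus _ _ _ _ _ (IHn x) (Taylor_term_deriv (S n) f a x)) as H.
    eapply is_derive_ext; [|exact H]. intros t; reflexivity.
Qed.

Lemma LC_Taylor w n f a : good w -> LC w n (Taylor n f a).
Proof.
  intros Hg. revert f. induction n; intros f.
  - apply LC_ext with (fun _ => f a). intros. unfold Taylor; simpl. field. apply LC_const; auto.
  - apply LC_S. split. intros x; eexists; apply Taylor_deriv.
    apply LC_ext with (Taylor n (Derive f) a). intros x. symmetry. apply is_derive_unique, Taylor_deriv.
    apply IHn.
Qed.

Lemma sum_bound (c : nat -> R) n B : (forall k, (k <= n)%nat -> Rabs (c k) <= B) ->
  Rabs (sum_f_R0 c n) <= INR (S n) * B.
Proof.
  induction n; intros H.
  - simpl. rewrite Rmult_1_l. apply H. lia.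
  - simpl sum_f_R0. eapply Rle_trans. apply Rabs_triang. rewrite S_INR.
    specialize (IHn (fun k Hk => H k ltac:(lia))). specialize (H (S n) (le_n _)). lra.
Qed.

Lemma Taylor_bound n f a x B T : 0 <= T -> Rabs (x - a) <= T ->
  (forall k, (k <= n)%nat -> Rabs (Derive_n f k a) <= B) ->
  Rabs (Taylor n f a x) <= INR (S n) * (B * (1 + T) ^ n).
Proof.
  intros HT Hx HB. unfold Taylor. apply sum_bound. intros k Hk.
  assert (HB0 : 0 <= B) by (eapply Rle_trans; [apply Rabs_pos | apply (HB O); lia]).
  rewrite Rabs_mult, Rabs_div, <- RPow_abs.
  2:{ pose proof (INR_fact_pos k). lra. }
  rewrite (Rabs_right (INR _)) by (left; apply INR_fact_pos).
  assert (1 <= INR (Factorial.fact k)).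
  { apply (le_INR 1). apply Factorial.lt_O_fact. }
  assert (Rabs (Derive_n f k a) / INR (Factorial.fact k) <= B).
  { apply Rle_trans with (Rabs (Derive_n f k a)). unfold Rdiv.
    rewrite <- (Rmult_1_r (Rabs (Derive_n f k a))) at 2. apply Rmult_le_compat_l. apply Rabs_pos.
    rewrite <- Rinv_1. apply Rinv_le_contravar; lra. auto. }
  assert (Rabs (x - a) ^ k <= (1 + T) ^ n).
  { apply Rle_trans with ((1 + T) ^ k). apply pow_incr. split. apply Rabs_pos. lra.
    apply Rle_pow. lra. auto. }
  apply Rmult_le_compat; auto. apply Rdiv_le_0_compat. apply Rabs_pos. lra. apply pow_le, Rabs_pos.
Qed.

Lemma taylor_rem w f n a x H : good w -> 0 <= H ->
  (forall k, (k < n)%nat -> forall y, ex_derive (Derive_n f k) y) -> a <= x ->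
  (forall y z, a <= y <= x -> a <= z <= x -> Rabs (Derive_n f n y - Derive_n f n z) <= H * w (Rabs (y - z))) ->
  Rabs (f x - Taylor n f a x) <= H * w (x - a) * (x - a) ^ n.
Proof.
  intros Hg HH Hd Hax Hh.
  assert (Hw : forall t, 0 <= t -> 0 <= w t) by apply Hg.
  destruct (Req_dec a x) as [E|E].
  { subst. rewrite Taylor_at, Rminus_diag, Rabs_R0. rewrite Rminus_diag. apply Rmult_le_pos.
    apply Rmult_le_pos; auto. apply Hw; lra. apply pow_le; lra. }
  destruct n.
  - unfold Taylor. simpl. replace (f x - f a / 1 * 1) with (f x - f a) by field.
    rewrite Rmult_1_r. specialize (Hh x a ltac:(lra) ltac:(lra)). simpl in Hh.
    rewrite (Rabs_right (x - a)) in Hh by lra. exact Hh.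
  - destruct (Taylor_Lagrange f n a x) as [z [Hz Ez]]. lra.
    { intros t Ht k Hk. destruct k. exact I. simpl. apply Hd. lia. }
    rewrite Ez, Taylor_S.
    replace (sum_f_R0 (fun m : nat => (x - a) ^ m / INR (Factorial.fact m) * Derive_n f m a) n)
      with (Taylor n f a x).
    2:{ unfold Taylor. apply sum_eq. intros i _. unfold Rdiv. ring. }
    set (P := (x - a) ^ S n). set (Fc := INR (Factorial.fact (S n))). set (T0 := Taylor n f a x).
    replace (T0 + P / Fc * Derive_n f (S n) z - (T0 + Derive_n f (S n) a / Fc * P))
      with (P / Fc * (Derive_n f (S n) z - Derive_n f (S n) a)) by (unfold Rdiv; ring).
    unfold P, Fc.
    rewrite Rabs_mult. pose proof (INR_fact_pos (S n)).
    assert (1 <= INR (Factorial.fact (S n))) by (apply (le_INR 1); apply Factorial.lt_O_fact).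
    rewrite Rabs_div by lra. rewrite (Rabs_right (INR _)) by lra.
    rewrite Rabs_right by (apply Rle_ge, pow_le; lra).
    specialize (Hh z a ltac:(lra) ltac:(lra)). rewrite (Rabs_right (z - a)) in Hh by lra.
    assert (w (z - a) <= w (x - a)) by (apply Hg; lra).
    assert (0 <= (x - a) ^ S n) by (apply pow_le; lra).
    assert ((x - a) ^ S n / INR (Factorial.fact (S n)) <= (x - a) ^ S n).
    { unfold Rdiv. rewrite <- (Rmult_1_r ((x-a)^S n)) at 2. apply Rmult_le_compat_l; auto.
      rewrite <- Rinv_1. apply Rinv_le_contravar; lra. }
    assert (0 <= (x - a) ^ S n / INR (Factorial.fact (S n))) by (apply Rdiv_le_0_compat; lra).
    assert (Rabs (Derive_n f (S n) z - Derive_n f (S n) a) <= H * w (x - a)).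
    { eapply Rle_trans. apply Hh. apply Rmult_le_compat_l; auto. }
    assert (0 <= H * w (x - a)) by (apply Rmult_le_pos; auto; apply Hw; lra).
    apply Rle_trans with ((x - a) ^ S n * (H * w (x - a))).
    apply Rmult_le_compat; auto. apply Rabs_pos. lra.
Qed.


Lemma LC_abs w f : good w -> LC w 0 f -> LC w 0 (fun x => Rabs (f x)).
Proof.
  intros Hg Hf. apply LC_0 in Hf. apply LC_0. intros p q. destruct (Hf p q) as [M [HM H]].
  exists M. split; auto. intros x y Hx Hy. eapply Rle_trans. apply Rabs_triang_inv2. auto.
Qed.

Lemma LC_bounds w n f : good w -> LC w n f -> forall p q, exists B, 0 <= B /\
  forall k, (k <= n)%nat -> forall y, p <= y <= q -> Rabs (Derive_n f k y) <= B.
Proof.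
  intros Hg. induction n; intros Hf p q.
  - destruct (locH_bound w _ Hg (proj2 Hf) p q) as [B [HB H]]. exists B. split; auto.
    intros k Hk y Hy. replace k with O by lia. auto.
  - destruct (IHn (LC_weaken w n f Hg Hf) p q) as [B1 [HB1 H1]].
    destruct (locH_bound w _ Hg (proj2 Hf) p q) as [B2 [HB2 H2]].
    exists (B1 + B2). split. lra. intros k Hk y Hy.
    destruct (Nat.eq_dec k (S n)). subst. specialize (H2 y Hy). lra.
    specialize (H1 k ltac:(lia) y Hy). lra.
Qed.

Lemma LC0_cont w f : good w -> LC w 0 f -> forall x, continuous f x.
Proof. intros Hg Hf x. apply (LC_cont w 0 f Hg Hf 0 (le_n 0) x). Qed.

Lemma LC0_exRInt w f a b : good w -> LC w 0 f -> ex_RInt f a b.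
Proof. intros Hg Hf. apply (ex_RInt_continuous (V := R_CompleteNormedModule)). intros; apply (LC0_cont w); auto. Qed.

Lemma RInt_minus' (f g : R -> R) a b : ex_RInt f a b -> ex_RInt g a b ->
  RInt (fun x => f x - g x) a b = RInt f a b - RInt g a b.
Proof. intros Hf Hg. apply (RInt_minus f g a b Hf Hg). Qed.

Lemma RInt_scal' (f : R -> R) a b l : ex_RInt f a b ->
  RInt (fun x => l * f x) a b = l * RInt f a b.
Proof. intros Hf. apply (RInt_scal f a b l Hf). Qed.

Lemma RInt_abs_bound (f : R -> R) a b M : a <= b -> ex_RInt f a b ->
  (forall x, a <= x <= b -> Rabs (f x) <= M) -> Rabs (RInt f a b) <= (b - a) * M.
Proof. intros; apply abs_RInt_le_const; auto. Qed.

Section Flat.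
Variable m' : nat.
Let m := S m'.
Variables w f g h : R -> R.
Variable K : R -> Prop.
Variables lo hi Mf Mg : R.
Hypothesis Hg : good w.
Hypothesis Hf : LC w m f.
Hypothesis Hgg : LC w m g.
Hypothesis Hh : LC w m h.
Hypothesis HMf : 0 <= Mf.
Hypothesis HMg : 0 <= Mg.
Hypothesis Hf_hol : forall y z, Rabs (Derive_n f m y - Derive_n f m z) <= Mf * w (Rabs (y - z)).
Hypothesis Hg_hol : forall y z, Rabs (Derive_n g m y - Derive_n g m z) <= Mg * w (Rabs (y - z)).
Hypothesis HK : forall x, K x -> lo <= x <= hi.
Hypothesis Hlh : lo <= hi.
Hypothesis HAV : AV_condition m f g h K.

Definition FF (x : R) : R := 2 * (Derive f x * g x - f x * Derive g x).

Lemma LC_f' : LC w m' (Derive f).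
Proof. apply LC_S in Hf. apply Hf. Qed.
Lemma LC_g' : LC w m' (Derive g).
Proof. apply LC_S in Hgg. apply Hgg. Qed.

Lemma LC0_of n phi : LC w n phi -> LC w 0 phi.
Proof. intros H. apply (LC_weaken_le w n 0 phi Hg); auto. lia. Qed.

Lemma LC_FF : LC w m' FF.
Proof.
  unfold FF. apply LC_scal; auto. apply LC_minus; auto; apply LC_mult; auto.
  apply LC_f'. apply LC_weaken; auto. apply LC_weaken; auto. apply LC_g'.
Qed.

Lemma rem_f a x : a <= x -> Rabs (f x - Taylor m f a x) <= Mf * w (x - a) * (x - a) ^ m.
Proof.
  intros Hax. apply taylor_rem; [exact Hg | exact HMf | apply (proj1 Hf) | exact Hax | intros; apply Hf_hol].
Qed.
Lemma rem_g a x : a <= x -> Rabs (g x - Taylor m g a x) <= Mg * w (x - a) * (x - a) ^ m.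
Proof.
  intros Hax. apply taylor_rem; [exact Hg | exact HMg | apply (proj1 Hgg) | exact Hax | intros; apply Hg_hol].
Qed.
Lemma rem_f' a x : a <= x -> Rabs (Derive f x - Taylor m' (Derive f) a x) <= Mf * w (x - a) * (x - a) ^ m'.
Proof.
  intros Hax. apply taylor_rem; [exact Hg | exact HMf | apply (proj1 LC_f') | exact Hax |].
  intros y z _ _. rewrite <- !Derive_n_S. apply Hf_hol.
Qed.
Lemma rem_g' a x : a <= x -> Rabs (Derive g x - Taylor m' (Derive g) a x) <= Mg * w (x - a) * (x - a) ^ m'.
Proof.
  intros Hax. apply taylor_rem; [exact Hg | exact HMg | apply (proj1 LC_g') | exact Hax |].
  intros y z _ _. rewrite <- !Derive_n_S. apply Hg_hol.
Qed.

Lemma DTaylor phi a x : Derive (Taylor m phi a) x = Taylor m' (Derive phi) a x.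
Proof. apply is_derive_unique. apply Taylor_deriv. Qed.

Lemma flat_est : exists Cu, 0 <= Cu /\ forall a b, K a -> K b -> a < b ->
  Rabs (h b - h a - RInt FF a b) <= Cu * w (b - a) * (b - a) ^ m.
Proof.
  set (T := hi - lo).
  assert (HT : 0 <= T) by (unfold T; lra).
  destruct (LC_bounds w m f Hg Hf lo hi) as [B1 [HB1 HB1']].
  destruct (LC_bounds w m g Hg Hgg lo hi) as [B2 [HB2 HB2']].
  set (B := B1 + B2).
  assert (HBf : forall k, (k <= m)%nat -> forall y, lo <= y <= hi -> Rabs (Derive_n f k y) <= B)
    by (intros; unfold B; specialize (HB1' k H y H0); lra).
  assert (HBg : forall k, (k <= m)%nat -> forall y, lo <= y <= hi -> Rabs (Derive_n g k y) <= B)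
    by (intros; unfold B; specialize (HB2' k H y H0); lra).
  assert (HB : 0 <= B) by (unfold B; lra).
  destruct (locH_bound w FF Hg (proj2 (LC0_of m' FF LC_FF)) lo hi) as [BF [HBF HBF']].
  destruct (locH_bound w h Hg (proj2 (LC0_of m h Hh)) lo hi) as [Bh [HBh HBh']].
  set (Bp := INR (S m') * (B * (1 + T) ^ m')).
  assert (HBp : 0 <= Bp) by (unfold Bp; apply Rmult_le_pos; [apply pos_INR | apply Rmult_le_pos; auto; apply pow_le; lra]).
  assert (Tpf : forall a x, lo <= a <= hi -> lo <= x <= hi -> Rabs (Taylor m' (Derive f) a x) <= Bp).
  { intros a x Ha Hx. apply Taylor_bound. auto. apply Rabs_le; unfold T; lra.
    intros k Hk. rewrite <- Derive_n_S. apply HBf; auto. unfold m; lia. }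
  assert (Tpg : forall a x, lo <= a <= hi -> lo <= x <= hi -> Rabs (Taylor m' (Derive g) a x) <= Bp).
  { intros a x Ha Hx. apply Taylor_bound. auto. apply Rabs_le; unfold T; lra.
    intros k Hk. rewrite <- Derive_n_S. apply HBg; auto. unfold m; lia. }
  destruct (HAV 1 ltac:(lra)) as [dl [Hdl HAVd]].
  destruct Hg as [w0 [wp [wm [wlin wc]]]].
  destruct (wlin (Rmax T 1)) as [Cw [HCw HCw']]. { apply Rlt_le_trans with 1; [lra | apply Rmax_r]. }
  set (C1 := (Mf + Mg) * (B + Bp * T)).
  set (Bu0 := 2 * Bh + T * BF).
  exists (2 * C1 + 2 * B * (Mf + Mg) + (T ^ m' + 2 * Bp) * Cw + Bu0 * Cw / dl ^ (S m)).
  split.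
  { assert (0 <= C1) by (unfold C1; apply Rmult_le_pos; [lra | apply Rplus_le_le_0_compat; auto; apply Rmult_le_pos; auto]).
    assert (0 <= T ^ m') by (apply pow_le; auto).
    assert (0 <= Bu0) by (unfold Bu0; nra).
    assert (0 <= Bu0 * Cw / dl ^ S m) by (apply Rdiv_le_0_compat; [nra | apply pow_lt; lra]).
    nra. }
  intros a b Ka Kb Hab.
  destruct (HK a Ka) as [Ha1 Ha2]. destruct (HK b Kb) as [Hb1 Hb2].
  set (t := b - a).
  assert (Ht : 0 < t) by (unfold t; lra).
  assert (HtT : t <= T) by (unfold t, T; lra).
  assert (Hwt : 0 <= w t) by (apply wp; lra).
  assert (HtCw : t <= Cw * w t) by (apply HCw'; split; [lra | apply Rle_trans with T; auto; apply Rmax_l]).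
  assert (Htm : 0 <= t ^ m) by (apply pow_le; lra).
  assert (Htm' : 0 <= t ^ m') by (apply pow_le; lra).
  assert (Etm : t ^ m = t * t ^ m') by reflexivity.
  set (p := Taylor m f a). set (q := Taylor m g a).
  assert (Lp : LC w 0 p) by (apply (LC0_of m); apply LC_Taylor; auto; repeat split; auto).
  assert (Lq : LC w 0 q) by (apply (LC0_of m); apply LC_Taylor; auto; repeat split; auto).
  assert (Gd : good w) by (repeat split; auto).
  assert (Lp' : LC w 0 (Derive p)).
  { apply LC_ext with (Taylor m' (Derive f) a). intros; symmetry; apply DTaylor.
    apply (LC0_of m'). apply LC_Taylor; auto. }
  assert (Lq' : LC w 0 (Derive q)).
  { apply LC_ext with (Taylor m' (Derive g) a). intros; symmetry; apply DTaylor.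
    apply (LC0_of m'). apply LC_Taylor; auto. }
  assert (Lf0 : LC w 0 f) by (apply (LC0_of m); auto).
  assert (Lg0 : LC w 0 g) by (apply (LC0_of m); auto).
  assert (Lf'0 : LC w 0 (Derive f)) by (apply (LC0_of m'); apply LC_f').
  assert (Lg'0 : LC w 0 (Derive g)) by (apply (LC0_of m'); apply LC_g').
  set (Q := fun x => Derive p x * q x - Derive q x * p x).
  set (W := fun x => Derive f x * g x - f x * Derive g x).
  assert (LQ : LC w 0 Q) by (unfold Q; apply LC_minus; auto; apply LC_mult; auto).
  assert (LW : LC w 0 W) by (unfold W; apply LC_minus; auto; apply LC_mult; auto).
  assert (EF : RInt FF a b = 2 * (RInt (fun x => W x - Q x) a b + RInt Q a b)).
  { unfold FF. rewrite RInt_scal'. f_equal. rewrite (RInt_minus' W Q).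
    unfold Rminus at 2. rewrite Rplus_assoc, Rplus_opp_l, Rplus_0_r. reflexivity.
    apply (LC0_exRInt w); auto. apply (LC0_exRInt w); auto. apply (LC0_exRInt w); auto. }
  assert (HG0 : forall x, a <= x <= b -> Rabs (W x - Q x) <= C1 * w t * t ^ m').
  { intros x Hx. unfold W, Q. unfold p, q. rewrite !DTaylor.
    fold p q.
    assert (Hxl : lo <= x <= hi) by lra.
    pose proof (rem_f' a x ltac:(lra)) as R1. pose proof (rem_g' a x ltac:(lra)) as R2.
    pose proof (rem_f a x ltac:(lra)) as R3. pose proof (rem_g a x ltac:(lra)) as R4.
    fold p in R3. fold q in R4.
    assert (Mw : forall M j, 0 <= M -> M * w (x - a) * (x - a) ^ j <= M * w t * t ^ j).
    { intros M j HM. rewrite !Rmult_assoc. apply Rmult_le_compat_l; auto.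
      apply Rmult_le_compat. apply wp; lra. apply pow_le; lra. apply wm; unfold t; lra.
      apply pow_incr; unfold t; lra. }
    pose proof (Mw Mf m' HMf). pose proof (Mw Mg m' HMg). pose proof (Mw Mf m HMf). pose proof (Mw Mg m HMg).
    pose proof (Tpf a x ltac:(lra) Hxl) as P1. pose proof (Tpg a x ltac:(lra) Hxl) as P2.
    pose proof (HBf O ltac:(unfold m; lia) x Hxl) as F0. pose proof (HBg O ltac:(unfold m; lia) x Hxl) as G0.
    simpl in F0, G0.
    set (A1 := Derive f x - Taylor m' (Derive f) a x) in *.
    set (A2 := Derive g x - Taylor m' (Derive g) a x) in *.
    set (A3 := f x - p x) in *. set (A4 := g x - q x) in *.
    replace (Derive f x * g x - f x * Derive g x - (Taylor m' (Derive f) a x * q x - Taylor m' (Derive g) a x * p x))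
      with (A1 * g x + Taylor m' (Derive f) a x * A4 - A2 * f x - Taylor m' (Derive g) a x * A3)
      by (unfold A1, A2, A3, A4; ring).
    assert (E1 : Rabs (A1 * g x) <= Mf * w t * t ^ m' * B) by (rewrite Rabs_mult; apply Rmult_le_compat; try apply Rabs_pos; lra).
    assert (E2 : Rabs (A2 * f x) <= Mg * w t * t ^ m' * B) by (rewrite Rabs_mult; apply Rmult_le_compat; try apply Rabs_pos; lra).
    assert (E3 : Rabs (Taylor m' (Derive f) a x * A4) <= Bp * (Mg * w t * t ^ m)) by (rewrite Rabs_mult; apply Rmult_le_compat; try apply Rabs_pos; lra).
    assert (E4 : Rabs (Taylor m' (Derive g) a x * A3) <= Bp * (Mf * w t * t ^ m)) by (rewrite Rabs_mult; apply Rmult_le_compat; try apply Rabs_pos; lra).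
    assert (Etm2 : t ^ m <= T * t ^ m') by (rewrite Etm; apply Rmult_le_compat_r; auto).
    assert (0 <= w t * t ^ m') by (apply Rmult_le_pos; auto).
    assert (Bp * (Mg * w t * t ^ m) <= Bp * Mg * T * (w t * t ^ m')).
    { replace (Bp * (Mg * w t * t ^ m)) with (Bp * Mg * w t * t ^ m) by ring.
      replace (Bp * Mg * T * (w t * t ^ m')) with (Bp * Mg * w t * (T * t ^ m')) by ring.
      apply Rmult_le_compat_l; auto. apply Rmult_le_pos; auto. apply Rmult_le_pos; auto. }
    assert (Bp * (Mf * w t * t ^ m) <= Bp * Mf * T * (w t * t ^ m')).
    { replace (Bp * (Mf * w t * t ^ m)) with (Bp * Mf * w t * t ^ m) by ring.
      replace (Bp * Mf * T * (w t * t ^ m')) with (Bp * Mf * w t * (T * t ^ m')) by ring.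
      apply Rmult_le_compat_l; auto. apply Rmult_le_pos; auto. apply Rmult_le_pos; auto. }
    unfold Rminus at 1. eapply Rle_trans. apply Rabs_triang. rewrite Rabs_Ropp.
    unfold Rminus at 1. eapply Rle_trans. apply Rplus_le_compat_r. apply Rabs_triang. rewrite Rabs_Ropp.
    eapply Rle_trans. apply Rplus_le_compat_r. apply Rplus_le_compat_r. apply Rabs_triang.
    unfold C1.
    replace ((Mf + Mg) * (B + Bp * T) * w t * t ^ m') with
      (Mf * w t * t ^ m' * B + Bp * Mg * T * (w t * t ^ m') + Mg * w t * t ^ m' * B + Bp * Mf * T * (w t * t ^ m')) by ring.
    lra. }
  assert (HG0i : Rabs (RInt (fun x => W x - Q x) a b) <= C1 * w t * t ^ m).
  { eapply Rle_trans. apply RInt_abs_bound. lra. apply (LC0_exRInt w); auto. apply LC_minus; auto. apply HG0.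
    fold t. rewrite Etm. right; ring. }
  assert (Hdiff : Rabs ((h b - h a - RInt FF a b) - A_fun m f g h a b) <= (2 * C1 + 2 * B * (Mf + Mg)) * w t * t ^ m).
  { unfold A_fun. fold p q. change (fun x => Derive p x * q x - Derive q x * p x) with Q.
    rewrite EF.
    replace (h b - h a - 2 * (RInt (fun x : R => W x - Q x) a b + RInt Q a b) -
      (h b - h a - 2 * RInt Q a b + 2 * f a * (g b - q b) - 2 * g a * (f b - p b)))
      with (- 2 * RInt (fun x : R => W x - Q x) a b - 2 * f a * (g b - q b) + 2 * g a * (f b - p b)) by ring.
    pose proof (rem_f a b ltac:(lra)) as R3. pose proof (rem_g a b ltac:(lra)) as R4. fold p q t in R3, R4.
    pose proof (HBf O ltac:(unfold m; lia) a ltac:(lra)) as F0. pose proof (HBg O ltac:(unfold m; lia) a ltac:(lra)) as G0.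
    simpl in F0, G0.
    assert (E1 : Rabs (- 2 * RInt (fun x : R => W x - Q x) a b) <= 2 * (C1 * w t * t ^ m)).
    { rewrite Rabs_mult. replace (Rabs (-2)) with 2 by (rewrite Rabs_left; lra). lra. }
    assert (E2 : Rabs (2 * f a * (g b - q b)) <= 2 * B * (Mg * w t * t ^ m)).
    { rewrite !Rabs_mult. rewrite (Rabs_right 2) by lra. rewrite Rmult_assoc, (Rmult_assoc 2 B).
      apply Rmult_le_compat_l. lra. apply Rmult_le_compat; auto; apply Rabs_pos. }
    assert (E3 : Rabs (2 * g a * (f b - p b)) <= 2 * B * (Mf * w t * t ^ m)).
    { rewrite !Rabs_mult. rewrite (Rabs_right 2) by lra. rewrite Rmult_assoc, (Rmult_assoc 2 B).
      apply Rmult_le_compat_l. lra. apply Rmult_le_compat; auto; apply Rabs_pos. }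
    unfold Rminus at 1. eapply Rle_trans. apply Rabs_triang.
    eapply Rle_trans. apply Rplus_le_compat_r. apply Rabs_triang. rewrite Rabs_Ropp.
    replace ((2 * C1 + 2 * B * (Mf + Mg)) * w t * t ^ m) with
      (2 * (C1 * w t * t ^ m) + 2 * B * (Mg * w t * t ^ m) + 2 * B * (Mf * w t * t ^ m)) by ring.
    lra. }
  destruct (Rlt_dec t dl) as [Hsmall|Hbig].
  -
    specialize (HAVd a b Ka Kb ltac:(unfold t in Hsmall; lra)).
    set (V := V_fun m f g a b) in *.
    assert (HV : V <= (T ^ m' + 2 * Bp) * (t * t ^ m)).
    { unfold V, V_fun. fold p q.
      assert (HI : RInt (fun x => Rabs (Derive p x) + Rabs (Derive q x)) a b <= t * (2 * Bp)).
      { eapply Rle_trans. apply Rle_abs. apply RInt_abs_bound. lra.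
        apply (LC0_exRInt w); auto. apply LC_plus; auto; apply LC_abs; auto.
        intros x Hx. unfold p, q. rewrite !DTaylor. rewrite Rabs_right by (apply Rle_ge, Rplus_le_le_0_compat; apply Rabs_pos).
        pose proof (Tpf a x ltac:(lra) ltac:(lra)). pose proof (Tpg a x ltac:(lra) ltac:(lra)). lra. }
      fold t. replace (2 * m)%nat with (S m' + S m')%nat by (unfold m; lia). rewrite pow_add.
      fold m. rewrite Etm at 1.
      assert (t ^ m' <= T ^ m') by (apply pow_incr; lra).
      assert (t ^ m * (t * t ^ m') <= t ^ m * (t * T ^ m')).
      { apply Rmult_le_compat_l; auto. apply Rmult_le_compat_l; lra. }
      assert (t ^ m * RInt (fun x => Rabs (Derive p x) + Rabs (Derive q x)) a b <= t ^ m * (t * (2 * Bp)))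
        by (apply Rmult_le_compat_l; auto).
      replace ((T ^ m' + 2 * Bp) * (t * t ^ m)) with (t ^ m * (t * T ^ m') + t ^ m * (t * (2 * Bp))) by ring.
      lra. }
    assert (HVp : 0 < V).
    { unfold V, V_fun. apply Rplus_lt_le_0_compat. apply pow_lt. lra.
      apply Rmult_le_pos. apply pow_le; lra. apply RInt_ge_0. lra.
      apply (LC0_exRInt w); auto. apply LC_plus; auto; apply LC_abs; auto.
      intros; apply Rplus_le_le_0_compat; apply Rabs_pos. }
    assert (HA : Rabs (A_fun m f g h a b) <= V).
    { unfold Rdiv in HAVd. rewrite Rabs_mult, Rabs_inv, (Rabs_right V) in HAVd by lra.
      assert (Hm : Rabs (A_fun m f g h a b) * / V * V < 1 * V) by (apply Rmult_lt_compat_r; lra).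
      rewrite Rmult_assoc, Rinv_l, Rmult_1_r in Hm by lra. lra. }
    assert (HA2 : Rabs (A_fun m f g h a b) <= (T ^ m' + 2 * Bp) * Cw * w t * t ^ m).
    { eapply Rle_trans. apply HA. eapply Rle_trans. apply HV.
      replace ((T ^ m' + 2 * Bp) * Cw * w t * t ^ m) with ((T ^ m' + 2 * Bp) * ((Cw * w t) * t ^ m)) by ring.
      apply Rmult_le_compat_l. assert (0 <= T ^ m') by (apply pow_le; lra). lra.
      apply Rmult_le_compat_r; auto. }
    replace (h b - h a - RInt FF a b) with (((h b - h a - RInt FF a b) - A_fun m f g h a b) + A_fun m f g h a b) by ring.
    eapply Rle_trans. apply Rabs_triang. fold t.
    assert (0 <= Bu0 * Cw / dl ^ S m * w t * t ^ m).
    { apply Rmult_le_pos; auto. apply Rmult_le_pos; auto. apply Rdiv_le_0_compat. unfold Bu0.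
      apply Rmult_le_pos; auto. nra. apply pow_lt; lra. }
    nra.
  -
    assert (Hdt : dl <= t) by lra.
    assert (Hb0 : Rabs (h b - h a - RInt FF a b) <= Bu0).
    { unfold Bu0. pose proof (HBh' b ltac:(lra)). pose proof (HBh' a ltac:(lra)).
      assert (Rabs (RInt FF a b) <= t * BF).
      { apply RInt_abs_bound. lra. apply (LC0_exRInt w); auto. apply (LC0_of m'); apply LC_FF.
        intros; apply HBF'; lra. }
      assert (t * BF <= T * BF) by (apply Rmult_le_compat_r; auto).
      unfold Rminus. eapply Rle_trans. apply Rabs_triang. rewrite Rabs_Ropp.
      eapply Rle_trans. apply Rplus_le_compat_r. apply Rabs_triang. rewrite Rabs_Ropp. lra. }
    assert (Hd1 : dl ^ S m <= Cw * w t * t ^ m).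
    { apply Rle_trans with (t ^ S m). apply pow_incr; lra. simpl. fold m.
      apply Rmult_le_compat_r; auto. }
    assert (Hdp : 0 < dl ^ S m) by (apply pow_lt; lra).
    assert (HBu : 0 <= Bu0) by (unfold Bu0; nra).
    assert (Bu0 <= Bu0 * Cw / dl ^ S m * w t * t ^ m).
    { replace (Bu0 * Cw / dl ^ S m * w t * t ^ m) with (Bu0 * (Cw * w t * t ^ m) / dl ^ S m) by (field; lra).
      apply Rmult_le_reg_r with (dl ^ S m); auto. unfold Rdiv. rewrite Rmult_assoc, Rinv_l, Rmult_1_r by lra.
      apply Rmult_le_compat_l; auto. }
    assert (0 <= 2 * C1 + 2 * B * (Mf + Mg) + (T ^ m' + 2 * Bp) * Cw).
    { assert (0 <= C1) by (unfold C1; apply Rmult_le_pos; [lra | apply Rplus_le_le_0_compat; auto; apply Rmult_le_pos; auto]).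
      assert (0 <= T ^ m') by (apply pow_le; auto). nra. }
    assert (0 <= (2 * C1 + 2 * B * (Mf + Mg) + (T ^ m' + 2 * Bp) * Cw) * w t * t ^ m)
      by (apply Rmult_le_pos; auto; apply Rmult_le_pos; auto).
    fold t. nra.
Qed.

End Flat.


Lemma mod_pos w : modulus_of_continuity w -> forall t, 0 < t -> 0 < w t.
Proof. intros [w0 [_ [_ [wi _]]]] t Ht. rewrite <- w0. apply wi; lra. Qed.

Lemma mod_ratio w : modulus_of_continuity w -> forall d L, 0 < d <= L -> d * w L <= L * w d.
Proof.
  intros Hw d L Hd. pose proof Hw as [w0 [_ [_ [_ wc]]]].
  specialize (wc L 0 (d / L) ltac:(lra) ltac:(lra)).
  assert (0 <= d / L <= 1).
  { split. apply Rdiv_le_0_compat; lra. apply Rmult_le_reg_r with L. lra.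
    unfold Rdiv. rewrite Rmult_assoc, Rinv_l by lra. lra. }
  specialize (wc H). rewrite w0 in wc.
  replace (d / L * L + (1 - d / L) * 0) with d in wc by (field; lra).
  replace (d / L * w L + (1 - d / L) * 0) with (d * w L / L) in wc by (field; lra).
  apply Rmult_le_reg_r with (/ L). apply Rinv_0_lt_compat; lra.
  replace (L * w d * / L) with (w d) by (field; lra).
  replace (d * w L * / L) with (d * w L / L) by (unfold Rdiv; ring). exact wc.
Qed.

Lemma mod_good w : modulus_of_continuity w -> good w.
Proof.
  intros Hw. pose proof Hw as [w0 [wp [wc [wi _]]]].
  split; [auto|split; [auto|split; [|split]]].
  - intros s t [Hs Hst]. destruct (Req_dec s t). subst; lra. left; apply wi; lra.
  - intros T HT. exists (T / w T). pose proof (mod_pos w Hw T HT).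
    split. apply Rdiv_le_0_compat; lra.
    intros t [Ht0 HtT]. destruct (Req_dec t 0). subst. rewrite w0. lra.
    pose proof (mod_ratio w Hw t T ltac:(lra)).
    apply Rmult_le_reg_r with (w T). auto.
    replace (T / w T * w t * w T) with (T * w t) by (field; lra). lra.
  - intros eps Heps. destruct (wc 0 ltac:(lra) eps Heps) as [d [Hd H]].
    exists d. split; auto. intros t [Ht0 Htd]. specialize (H t Ht0).
    rewrite w0, Rminus_0_r, Rminus_0_r in H. rewrite Rabs_right in H by lra.
    apply Rle_lt_trans with (Rabs (w t)). apply Rle_abs. apply H; lra.
Qed.

Lemma Cmw_LC m w phi : modulus_of_continuity w -> Cmw m w phi ->
  LC w m phi /\ exists M, 0 <= M /\ forall x y, Rabs (Derive_n phi m x - Derive_n phi m y) <= M * w (Rabs (x - y)).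
Proof.
  intros Hw [[Hd Hc] [M HM]].
  assert (Glob : forall x y, Rabs (Derive_n phi m x - Derive_n phi m y) <= M * w (Rabs (x - y))).
  { intros x y. destruct (Req_dec x y).
    - subst. rewrite !Rminus_diag, Rabs_R0. destruct Hw as [w0 _]. rewrite w0. lra.
    - specialize (HM y x (not_eq_sym H)). pose proof (mod_pos w Hw (Rabs (x - y))) as Hp.
      assert (0 < Rabs (x - y)) by (apply Rabs_pos_lt; lra). specialize (Hp H0).
      apply Rmult_le_compat_r with (r := w (Rabs (x - y))) in HM; [|lra].
      unfold Rdiv in HM. rewrite Rmult_assoc, Rinv_l, Rmult_1_r in HM by lra. auto. }
  assert (HM0 : 0 <= M).
  { specialize (HM 0 1 ltac:(lra)). eapply Rle_trans; [|apply HM].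
    apply Rdiv_le_0_compat. apply Rabs_pos. apply mod_pos; auto. rewrite Rminus_0_r, Rabs_R1. lra. }
  split. split. auto. intros p q. exists M. split; auto.
  exists M. split; auto.
Qed.

Lemma cs_holder w n phi p q : good w -> LC w n phi -> p <= q ->
  (forall y, y < p -> phi y = 0) -> (forall y, q < y -> phi y = 0) ->
  exists M, 0 <= M /\ forall x y, Rabs (Derive_n phi n x - Derive_n phi n y) <= M * w (Rabs (x - y)).
Proof.
  intros Hg Hl Hpq H1 H2.
  assert (Z1 : forall y, y <= p -> Derive_n phi n y = 0).
  { intros y Hy. destruct (Req_dec y p). subst. apply (zero_derivs_left w n phi p Hg Hl H1 n (le_n n)).
    rewrite (Derive_n_ext_loc phi (fun _ => 0)). apply Derive_n_zero.
    apply locally_of. exists (p - y). split. lra. intros z Hz. apply Rabs_lt_between in Hz. apply H1; lra. }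
  assert (Z2 : forall y, q <= y -> Derive_n phi n y = 0).
  { intros y Hy. destruct (Req_dec y q). subst. apply (zero_derivs_right w n phi q Hg Hl H2 n (le_n n)).
    rewrite (Derive_n_ext_loc phi (fun _ => 0)). apply Derive_n_zero.
    apply locally_of. exists (y - q). split. lra. intros z Hz. apply Rabs_lt_between in Hz. apply H2; lra. }
  set (c := fun y => Rmax p (Rmin y q)).
  assert (Ec : forall y, Derive_n phi n y = Derive_n phi n (c y)).
  { intros y. unfold c. destruct (Rle_dec y p).
    - rewrite Rmin_left by lra. rewrite Rmax_left by lra. rewrite Z1, Z1; lra.
    - destruct (Rle_dec q y).
      + rewrite Rmin_right by lra. rewrite Rmax_right by lra. rewrite Z2, Z2; lra.
      + rewrite Rmin_left by lra. rewrite Rmax_right by lra. auto. }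
  assert (Hc : forall y, p <= c y <= q) by (intros; unfold c; split; [apply Rmax_l | apply Rmax_lub; [lra | apply Rmin_r]]).
  assert (Hcl : forall x y, Rabs (c x - c y) <= Rabs (x - y)).
  { intros x y. unfold c. unfold Rmax, Rmin.
    destruct (Rle_dec x q), (Rle_dec y q); destruct (Rle_dec p x), (Rle_dec p y), (Rle_dec p q);
    repeat (match goal with |- context [Rle_dec ?a ?b] => destruct (Rle_dec a b) end);
    apply Rabs_le; pose proof (Rle_abs (x - y)); pose proof (Rle_abs (y - x)); rewrite Rabs_minus_sym in H0; split; lra. }
  destruct (proj2 Hl p q) as [M [HM HM']]. exists M. split; auto.
  intros x y. rewrite (Ec x), (Ec y). eapply Rle_trans. apply HM'; auto.
  apply Rmult_le_compat_l; auto. apply Hg. split. apply Rabs_pos. auto.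
Qed.

Lemma compact_minmax K k0 : compact K -> K k0 -> exists lo hi, K lo /\ K hi /\ forall x, K x -> lo <= x <= hi.
Proof.
  intros Hc Hk0. destruct (compact_P1 K Hc) as [mb [Mb HB]].
  pose proof (compact_P2 K Hc) as HKc.
  destruct (lft_spec K k0 HKc Hk0 Mb ltac:(apply HB in Hk0; lra)) as [A1 [A2 A3]].
  destruct (rgt_spec K k0 HKc Hk0 mb ltac:(apply HB in Hk0; lra)) as [B1 [B2 B3]].
  exists (rgt K mb), (lft K Mb). split; auto. split; auto.
  intros x Kx. split. apply B3; auto; apply HB; auto. apply A3; auto; apply HB; auto.
Qed.

Lemma ex_derive_n_of_LC w n phi : LC w n phi -> forall y k, (k <= n)%nat -> ex_derive_n phi k y.
Proof. intros [H _] y k Hk. destruct k. exact I. simpl. apply H. lia. Qed.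

Theorem lemma3p6 (m : nat) (w f g h : R -> R) (K : R -> Prop) :
  (1 <= m)%nat ->
  modulus_of_continuity w ->
  Cmw m w f -> Cmw m w g -> Cmw m w h ->
  compact K ->
  AV_condition m f g h K ->
  exists hh : R -> R,
    Cmw m w hh /\
    (forall x, K x -> hh x = h x) /\
    (forall x, K x -> Derive hh x = 2 * (Derive f x * g x - f x * Derive g x)).
Proof.
  intros Hm Hw Cf Cg Ch HKcpt HAV.
  pose proof (mod_good w Hw) as Hg. pose proof (mod_ratio w Hw) as Hr.
  destruct (classic (exists k, K k)) as [[k0 Hk0]|HKe].
  2:{ exists h. split; auto. split; intros x Kx; exfalso; eauto. }
  pose proof (compact_P2 K HKcpt) as HKc.
  destruct (compact_minmax K k0 HKcpt Hk0) as [lo [hi [Klo [Khi Hb]]]].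
  assert (Hlh : lo <= hi) by (apply Hb; auto).
  destruct (Cmw_LC m w f Hw Cf) as [Lf [Mf [HMf Hf_hol]]].
  destruct (Cmw_LC m w g Hw Cg) as [Lg [Mg [HMg Hg_hol]]].
  destruct (Cmw_LC m w h Hw Ch) as [Lh [Mh [HMh Hh_hol]]].
  destruct m as [|m']. lia.
  destruct (flat_est m' w f g h K lo hi Mf Mg Hg Lf Lg Lh HMf HMg Hf_hol Hg_hol Hb Hlh HAV) as [Cu [HCu Hflat]].
  set (F := FF f g).
  assert (LF : LC w m' F) by (apply LC_FF; auto).
  assert (LF0 : LC w 0 F) by (apply (LC_weaken_le w m' 0 F Hg); auto; lia).
  set (P := fun x => RInt F lo x).
  assert (HP : forall x, is_derive P x (F x)).
  { intros x. apply (is_derive_RInt F P lo x).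
    apply locally_of. exists 1. split. lra. intros y _. apply (RInt_correct F lo y).
    apply (LC0_exRInt w); auto.
    apply (LC0_cont w); auto. }
  assert (LP : LC w (S m') P).
  { apply LC_S. split. intros x; eexists; apply HP.
    apply LC_ext with F. intros x; symmetry; apply is_derive_unique, HP. auto. }
  set (u := fun x => h x - P x).
  assert (Lu : LC w (S m') u) by (apply LC_minus; auto).
  assert (Eu : forall a b, u b - u a = h b - h a - RInt F a b).
  { intros a b. unfold u, P.
    pose proof (RInt_Chasles F lo a b) as HC.
    assert (E : RInt F lo a + RInt F a b = RInt F lo b).
    { apply HC; apply (LC0_exRInt w); auto. }
    rewrite <- E. ring. }
  assert (Hu : forall a b, K a -> K b -> Rabs (u b - u a) <= Cu * w (Rabs (b - a)) * Rabs (b - a) ^ (S m')).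
  { intros a b Ka Kb. destruct (Rtotal_order a b) as [Hab|[Hab|Hab]].
    - rewrite Eu. rewrite (Rabs_right (b - a)) by lra. apply Hflat; auto.
    - subst. rewrite !Rminus_diag, Rabs_R0. destruct Hw as [w0 _]. rewrite w0. simpl. lra.
    - rewrite <- Rabs_Ropp. replace (- (u b - u a)) with (u a - u b) by ring.
      rewrite Eu. rewrite (Rabs_left1 (b - a)) by lra. replace (- (b - a)) with (a - b) by ring. apply Hflat; auto. }
  destruct (psi_exists K lo hi HKc Klo Khi Hb w Hg Hr (S m') Hm u Cu HCu Hu) as [psi [Lpsi [Hpsi1 Hpsi2]]].
  set (chi := fun x => Sst (S m') (x - (lo - 2)) * Sst (S m') ((hi + 2) - x)).
  assert (Lchi : LC w (S m') chi).
  { apply LC_id_w; auto. unfold chi.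
    apply LC_ext with (fun x => Sst (S m') (1 * x + (- (lo - 2))) * Sst (S m') ((-1) * x + (hi + 2))).
    intros x. f_equal; f_equal; ring.
    apply LC_mult. apply good_id. apply LC_affine, LC_Sst. apply LC_affine, LC_Sst. }
  set (w0 := fun x => chi x * (psi x - u x)).
  assert (Lw0 : LC w (S m') w0) by (apply LC_mult; auto; apply LC_minus; auto).
  set (hh := fun x => h x + w0 x).
  assert (Lhh : LC w (S m') hh) by (apply LC_plus; auto).
  assert (chi1 : forall y, lo - 1 <= y <= hi + 1 -> chi y = 1).
  { intros y Hy. unfold chi. rewrite !Sst_1 by lra. ring. }
  destruct (cs_holder w (S m') w0 (lo - 2) (hi + 2) Hg Lw0 ltac:(lra)) as [M0 [HM0 HM0']].
  { intros y Hy. unfold w0, chi. rewrite (Sst_0 _ (y - (lo - 2))) by lra. ring. }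
  { intros y Hy. unfold w0, chi. rewrite (Sst_0 _ (hi + 2 - y)) by lra. ring. }
  exists hh. split; [|split].
  - split.
    + split. apply (proj1 Lhh). apply (LC_cont w (S m') hh Hg Lhh). lia.
    + exists (Mh + M0). intros a b Hab.
      assert (Hd : forall x, Derive_n hh (S m') x = Derive_n h (S m') x + Derive_n w0 (S m') x).
      { intros x. unfold hh. apply Derive_n_plus.
        apply locally_of. exists 1. split. lra. intros y _ k Hk. apply (ex_derive_n_of_LC w (S m')); auto.
        apply locally_of. exists 1. split. lra. intros y _ k Hk. apply (ex_derive_n_of_LC w (S m')); auto. }
      rewrite !Hd.
      assert (Hp : 0 < w (Rabs (b - a))) by (apply mod_pos; auto; apply Rabs_pos_lt; lra).
      apply Rmult_le_reg_r with (w (Rabs (b - a))). auto.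
      unfold Rdiv. rewrite Rmult_assoc, Rinv_l, Rmult_1_r by lra.
      replace (Derive_n h (S m') b + Derive_n w0 (S m') b - (Derive_n h (S m') a + Derive_n w0 (S m') a))
        with ((Derive_n h (S m') b - Derive_n h (S m') a) + (Derive_n w0 (S m') b - Derive_n w0 (S m') a)) by ring.
      eapply Rle_trans. apply Rabs_triang.
      pose proof (Hh_hol b a). pose proof (HM0' b a). lra.
  - intros x Kx. unfold hh, w0. rewrite Hpsi1 by auto. ring.
  - intros x Kx. destruct (Hb x Kx) as [Hx1 Hx2].
    assert (Dh : ex_derive h x) by (apply (LC_diff w m'); auto).
    assert (Dw0 : ex_derive w0 x) by (apply (LC_diff w m'); auto).
    assert (Dpsi : ex_derive psi x) by (apply (LC_diff w m'); auto).
    assert (Du : ex_derive u x) by (apply (LC_diff w m'); auto).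
    unfold hh. rewrite Derive_plus by auto.
    assert (E1 : Derive w0 x = Derive (fun y => psi y - u y) x).
    { apply is_derive_unique. apply is_derive_ext_loc with (fun y => psi y - u y).
      apply locally_of. exists 1. split. lra. intros y Hy. apply Rabs_lt_between in Hy.
      unfold w0. rewrite (chi1 y); [rewrite Rmult_1_l; reflexivity | split; lra].
      apply Derive_correct. apply (ex_derive_minus psi u); auto. }
    rewrite E1. rewrite Derive_minus by auto. rewrite Hpsi2 by auto.
    unfold u. rewrite Derive_minus by (auto || (eexists; apply HP)).
    rewrite (is_derive_unique P x (F x)) by apply HP.
    unfold F, FF. ring.
Qed.
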